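(* Let $\Gamma$ be a subalgebra of the $\Bbbk$-algebra $A$ such that (i) $\Gamma$ is noetherian, (ii) $\Gamma$ is quasicommutative, and (iii) $\Gamma$ is quasicentral in $A$. Then $\Gamma$ is a Harish-Chandra block subalgebra of $A$ with respect to the equality relation. Furthermore, for every $\mathfrak m\in\mathrm{cfs}(\Gamma)$ and $m\ge1$, $$\mathrm{Supp}(A/A\mathfrak m^m)\subseteq X(\mathfrak m):=\bigcup_{a\in A}\{\mathfrak n\in\mathrm{cfs}(\Gamma):S_{\mathfrak n}\in\mathrm{Fact}(\Gamma a\Gamma/\Gamma a\mathfrak m)\}.$$
   Context: $\mathrm{cfs}(\Gamma)$: maximal two-sided ideals $\mathfrak m$ of $\Gamma$ with $\dim\Gamma/\mathfrak m<\infty$; $S_{\mathfrak m}$ is the unique simple $\Gamma/\mathfrak m$-module; $\mathrm{Fact}(M)$ is the set of composition factors of a finite-dimensional module $M$. $\Gamma$ is quasicommutative if $\mathrm{Ext}^1_\Gamma(S_{\mathfrak m},S_{\mathfrak n})=0$ for distinct $\mathfrak m,\mathfrak n\in\mathrm{cfs}(\Gamma)$; $\Gamma$ is quasicentral in $A$ if $\Gamma a\Gamma$ is finitely generated as a left and as a right $\Gamma$-module for every $a\in A$. With respect to the equality relation, the classes are singletons $\{\mathfrak m\}$ (identified with $\mathfrak m$), and for a $\Gamma$-module $V$, $V(\mathfrak m)=\{v:\mathfrak m^kv=0$ for some $k\ge0\}$; $V$ is a block module if $V=\bigoplus_{\mathfrak m}V(\mathfrak m)$, and $\mathrm{Supp}(V)=\{\mathfrak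 m:V(\mathfrak m)\ne0\}$. $\Gamma$ is a Harish-Chandra block subalgebra of $A$ w.r.t. equality if $A/A\mathfrak m^k$ is a block module over $\Gamma$ for all $\mathfrak m\in\mathrm{cfs}(\Gamma)$, $k\ge0$. *)

(* Defs.v *)
From HB Require Import structures.
From mathcomp Require Import all_boot all_order all_algebra.
Set Implicit Arguments. Unset Strict Implicit. Unset Printing Implicit Defensive.
Import GRing.Theory.
Local Open Scope ring_scope.

Section Defs.
Variables (K : fieldType) (A : algType K).
Implicit Types (G m n Q P N I J L : A -> Prop).

Definition is_subalg G : Prop :=
  [/\ G 1, (forall x y, G x -> G y -> G (x + y)),
      (forall x y, G x -> G y -> G (x * y)) &
      (forall (c : K) x, G x -> G (c *: x))].

Definition lsub G N : Prop :=
  [/\ N 0, (forall x y, N x -> N y -> N (x + y)) &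
      (forall g x, G g -> N x -> N (g * x))].

Definition rsub G N : Prop :=
  [/\ N 0, (forall x y, N x -> N y -> N (x + y)) &
      (forall g x, G g -> N x -> N (x * g))].

Definition left_ideal G I : Prop := (forall x, I x -> G x) /\ lsub G I.
Definition right_ideal G I : Prop := (forall x, I x -> G x) /\ rsub G I.

Definition noetherian G : Prop :=
  (forall I : nat -> A -> Prop, (forall i, left_ideal G (I i)) ->
     (forall i x, I i x -> I i.+1 x) ->
     exists N0 : nat, forall i, (N0 <= i)%N -> forall x, I i x -> I N0 x) /\
  (forall I : nat -> A -> Prop, (forall i, right_ideal G (I i)) ->
     (forall i x, I i x -> I i.+1 x) ->
     exists N0 : nat, forall i, (N0 <= i)%N -> forall x, I i x -> I N0 x).

Definition two_ideal G m : Prop := left_ideal G m /\ right_ideal G m.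

(* cfs(Gamma): maximal two-sided ideals of finite codimension *)
Definition cfs G m : Prop :=
  [/\ two_ideal G m, ~ m 1,
      (forall J, two_ideal G J -> (forall x, m x -> J x) ->
                 (forall x, J x -> m x) \/ J 1) &
      (exists s : seq A, (forall i : 'I_(size s), G s`_i) /\
         forall g, G g -> exists c : 'I_(size s) -> K,
            m (g - \sum_(i < size s) c i *: s`_i))].

Definition is_Gmod G (E : vectType K) (act : A -> 'End(E)) : Prop :=
  [/\ act 1 = \1%VF,
      (forall x y, G x -> G y -> act (x * y) = (act x \o act y)%VF),
      (forall x y, G x -> G y -> act (x + y) = act x + act y) &
      (forall (c : K) x, G x -> act (c *: x) = c *: act x)].

Definition Gsubmod G (E : vectType K) (act : A -> 'End(E)) (U : {vspace E}) :=
  forall x, G x -> (act x @: U <= U)%VS.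

(* W/U is a simple module annihilated by n, i.e. W/U is isomorphic to S_n *)
Definition simple_sq_ann G (E : vectType K) (act : A -> 'End(E)) n
    (U W : {vspace E}) : Prop :=
  [/\ (U <= W)%VS, ~~ (W <= U)%VS,
      (forall N : {vspace E}, Gsubmod G act N -> (U <= N)%VS -> (N <= W)%VS ->
          (N <= U)%VS \/ (W <= N)%VS) &
      (forall x, n x -> (act x @: W <= U)%VS)].

(* Ext^1_Gamma(S_m, S_n) = 0 (Yoneda): every extension
   0 -> S_n -> E -> S_m -> 0 of Gamma-modules splits *)
Definition Ext1_vanish G m n : Prop :=
  forall (E : vectType K) (act : A -> 'End(E)), is_Gmod G act ->
  forall U : {vspace E}, Gsubmod G act U ->
    simple_sq_ann G act n 0%VS U -> simple_sq_ann G act m U fullv ->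
    exists W : {vspace E}, [/\ Gsubmod G act W, (U :&: W = 0)%VS &
                               (U + W = fullv)%VS].

Definition quasicommutative G : Prop :=
  forall m n, cfs G m -> cfs G n -> m <> n -> Ext1_vanish G m n.

Definition GaG G (a : A) : A -> Prop := fun x =>
  exists r (g h : 'I_r -> A), (forall i, G (g i) /\ G (h i)) /\
     x = \sum_(i < r) g i * a * h i.

Definition Gam G (a : A) m : A -> Prop := fun x =>
  exists r (g h : 'I_r -> A), (forall i, G (g i) /\ m (h i)) /\
     x = \sum_(i < r) g i * a * h i.

Definition lspan G (s : seq A) : A -> Prop := fun x =>
  exists c : 'I_(size s) -> A, (forall i, G (c i)) /\
     x = \sum_(i < size s) c i * s`_i.
Definition rspan G (s : seq A) : A -> Prop := fun x =>
  exists c : 'I_(size s) -> A, (forall i, G (c i)) /\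
     x = \sum_(i < size s) s`_i * c i.

Definition quasicentral G : Prop :=
  forall a : A,
    (exists s : seq A, forall x, GaG G a x <-> lspan G s x) /\
    (exists s : seq A, forall x, GaG G a x <-> rspan G s x).

(* products of j elements of m (elements spanning m^j; m^0 = Gamma) *)
Definition prodset m (j : nat) : A -> Prop := fun x =>
  exists p : 'I_j -> A, (forall i, m (p i)) /\ x = \prod_(i < j) p i.

Definition AmPow m (k : nat) : A -> Prop := fun x =>
  exists r (c p : 'I_r -> A), (forall i, prodset m k (p i)) /\
     x = \sum_(i < r) c i * p i.

(* for V = A/L: x + L lies in V(n) = {v | n^j v = 0 for some j} *)
Definition in_Vn n L (x : A) : Prop :=
  exists j, forall p, prodset n j p -> L (p * x).

(* A/L is a block module: A/L = (+)_{n in cfs} V(n) (internal direct sum) *)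
Definition block_quot G L : Prop :=
  (forall x, exists r (ns : 'I_r -> A -> Prop) (xs : 'I_r -> A),
      [/\ (forall i, cfs G (ns i)), injective ns,
          (forall i, in_Vn (ns i) L (xs i)) &
          L (x - \sum_(i < r) xs i)]) /\
  (forall r (ns : 'I_r -> A -> Prop) (xs : 'I_r -> A),
      (forall i, cfs G (ns i)) -> injective ns ->
      (forall i, in_Vn (ns i) L (xs i)) -> L (\sum_(i < r) xs i) ->
      forall i, L (xs i)).

Definition HC_block_subalg G : Prop :=
  forall m, cfs G m -> forall k : nat, block_quot G (AmPow m k).

Definition Supp G L n : Prop :=
  cfs G n /\ exists x, in_Vn n L x /\ ~ L x.

Definition simple_pq G Q P : Prop :=
  [/\ (forall x, Q x -> P x), (exists x, P x /\ ~ Q x) &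
      (forall N, lsub G N -> (forall x, Q x -> N x) -> (forall x, N x -> P x) ->
         (forall x, N x -> Q x) \/ (forall x, P x -> N x))].

(* S_n in Fact(P/Q): S_n is a factor of some composition series of P/Q *)
Definition in_Fact G n Q P : Prop :=
  exists (r : nat) (Ls : nat -> A -> Prop),
    [/\ (forall i, (i <= r)%N -> lsub G (Ls i)),
        (forall x, Ls 0%N x <-> Q x), (forall x, Ls r x <-> P x),
        (forall i, (i < r)%N -> simple_pq G (Ls i) (Ls i.+1)) &
        exists i, (i < r)%N /\ forall x y, n x -> Ls i.+1 y -> Ls i (x * y)].

Definition Xset G m n : Prop :=
  cfs G n /\ exists a : A, in_Fact G n (Gam G a m) (GaG G a).

End Defs.

(* Main.v *)
Require Import Defs.
From Stdlib Require Import ClassicalEpsilon Classical FunctionalExtensionality PropExtensionality.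
From HB Require Import structures.
From mathcomp Require Import all_boot all_order all_algebra.
Set Implicit Arguments. Unset Strict Implicit. Unset Printing Implicit Defensive.
Import GRing.Theory.
Local Open Scope ring_scope.

Section LinAlg.
Variables (K : fieldType) (A : algType K).
Implicit Types (s t : seq A) (P Q N M : A -> Prop).

Definition spn s (x : A) :=
  exists c : 'I_(size s) -> K, x = \sum_(i < size s) c i *: s`_i.
Definition subsp N :=
  [/\ N 0, (forall x y, N x -> N y -> N (x + y)) &
      (forall (c : K) x, N x -> N (c *: x))].
Definition spans s Q P := forall x, P x -> exists z, spn s z /\ Q (x - z).
Fixpoint allin P s := if s is a :: s' then P a /\ allin P s' else True.

Lemma spn_nil x : spn [::] x <-> x = 0.
Proof.
split; first by case=> c ->; rewrite big_ord0.
by move=> ->; exists (fun _ => 0); rewrite big_ord0.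
Qed.

Lemma spn_cons a s x :
  spn (a :: s) x <-> exists k z, spn s z /\ x = k *: a + z.
Proof.
split.
  case=> c ->; rewrite /= big_ord_recl /=.
  exists (c ord0), (\sum_(i < size s) c (lift ord0 i) *: s`_i); split=> //.
  by exists (fun i => c (lift ord0 i)).
case=> k [z [[c ->] ->]].
exists (fun i : 'I_(size s).+1 => if unlift ord0 i is Some j then c j else k).
rewrite /= big_ord_recl /= unlift_none; congr (_ + _).
by apply: eq_bigr => i _; rewrite liftK.
Qed.

Lemma spn0 s : spn s 0.
Proof. by exists (fun _ => 0); rewrite big1 // => i _; rewrite scale0r. Qed.

Lemma spnD s x y : spn s x -> spn s y -> spn s (x + y).
Proof.
case=> c -> [d ->]; exists (fun i => c i + d i).
by rewrite -big_split; apply: eq_bigr => i _; rewrite scalerDl.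
Qed.

Lemma spnZ s k x : spn s x -> spn s (k *: x).
Proof.
case=> c ->; exists (fun i => k * c i).
by rewrite scaler_sumr; apply: eq_bigr => i _; rewrite scalerA.
Qed.

Lemma spnN s x : spn s x -> spn s (- x).
Proof. by move=> h; rewrite -scaleN1r; apply: spnZ. Qed.

Lemma spnB s x y : spn s x -> spn s y -> spn s (x - y).
Proof. by move=> hx hy; apply: spnD => //; apply: spnN. Qed.

Lemma spn_cat s t x y : spn s x -> spn t y -> spn (s ++ t) (x + y).
Proof.
elim: s x => [|a s IH] x /=.
  by move=> /spn_nil -> h; rewrite add0r.
move=> /spn_cons [k [z [hz ->]]] hy; apply/spn_cons.
by exists k, (z + y); split; [apply: IH | rewrite addrA].
Qed.

Lemma spn_catl s t x : spn s x -> spn (s ++ t) x.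
Proof. by move=> h; rewrite -(addr0 x); apply: spn_cat => //; apply: spn0. Qed.

Lemma spn_catr s t x : spn t x -> spn (s ++ t) x.
Proof. by move=> h; rewrite -(add0r x); apply: spn_cat => //; apply: spn0. Qed.

Lemma spn_head a s : spn (a :: s) a.
Proof. by apply/spn_cons; exists 1, 0; split; [apply: spn0 | rewrite scale1r addr0]. Qed.

Lemma spn_tail a s x : spn s x -> spn (a :: s) x.
Proof. by move=> h; apply/spn_cons; exists 0, x; split=> //; rewrite scale0r add0r. Qed.

Section Subsp.
Variable N : A -> Prop.
Hypothesis hN : subsp N.
Lemma ss0 : N 0. Proof. by case: hN. Qed.
Lemma ssD x y : N x -> N y -> N (x + y). Proof. by case: hN => _ h _; apply: h. Qed.
Lemma ssZ k x : N x -> N (k *: x). Proof. by case: hN => _ _ h; apply: h. Qed.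
Lemma ssN x : N x -> N (- x). Proof. by move=> h; rewrite -scaleN1r; apply: ssZ. Qed.
Lemma ssB x y : N x -> N y -> N (x - y). Proof. by move=> hx hy; apply: ssD => //; apply: ssN. Qed.
Lemma ss_spn s x : allin N s -> spn s x -> N x.
Proof.
elim: s x => [|a s IH] x /=; first by move=> _ /spn_nil ->; apply: ss0.
case=> ha hs /spn_cons [k [z [hz ->]]]; apply: ssD; [by apply: ssZ | by apply: IH].
Qed.
Lemma ss_eq x y : x = y -> N x -> N y. Proof. by move=> ->. Qed.
End Subsp.

Lemma allin_impl P P' s : (forall x, P x -> P' x) -> allin P s -> allin P' s.
Proof. by move=> h; elim: s => //= a s IH [/h ha /IH hs]; split. Qed.

Lemma allin_cat P s t : allin P s -> allin P t -> allin P (s ++ t).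
Proof. by elim: s => //= a s IH [ha /IH hs] /hs ?; split. Qed.

Lemma allin2 P P' P'' s : (forall x, P x -> P' x -> P'' x) ->
  allin P s -> allin P' s -> allin P'' s.
Proof. by move=> h; elim: s => //= a s IH [ha hs] [ha' hs']; split; [apply: h | apply: IH]. Qed.

Lemma allin_all P s : (forall x, P x) -> allin P s.
Proof. by move=> h; elim: s => //= a s IH; split. Qed.

Lemma allin_nth P s (i : 'I_(size s)) : allin P s -> P s`_i.
Proof.
case: i => i /=; elim: s i => [|a s IH] [|i] //= hi [ha hs] //.
exact: IH.
Qed.

Lemma spns_cat s t Q P : spans s Q P -> spans (s ++ t) Q P.
Proof. by move=> h x /h [z [hz hq]]; exists z; split=> //; apply: spn_catl. Qed.


Definition eqm Q x y := Q (x - y).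

Section Eqm.
Variable Q : A -> Prop.
Hypothesis hQ : subsp Q.
Lemma eqm_refl x : eqm Q x x. Proof. by rewrite /eqm subrr; apply: ss0. Qed.
Lemma eqm_eq x y : x = y -> eqm Q x y. Proof. by move=> ->; apply: eqm_refl. Qed.
Lemma eqm_sym x y : eqm Q x y -> eqm Q y x.
Proof. by rewrite /eqm => h; rewrite -opprB; apply: ssN. Qed.
Lemma eqm_trans y x z : eqm Q x y -> eqm Q y z -> eqm Q x z.
Proof. by rewrite /eqm => h1 h2; rewrite -(subrKA y); apply: ssD. Qed.
Lemma eqmD x x' y y' : eqm Q x x' -> eqm Q y y' -> eqm Q (x + y) (x' + y').
Proof. by rewrite /eqm => h1 h2; rewrite opprD addrACA; apply: ssD. Qed.
Lemma eqmZ k x x' : eqm Q x x' -> eqm Q (k *: x) (k *: x').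
Proof. by rewrite /eqm => h; rewrite -scalerBr; apply: ssZ. Qed.
Lemma eqmN x x' : eqm Q x x' -> eqm Q (- x) (- x').
Proof. by rewrite /eqm => h; rewrite -opprD; apply: ssN. Qed.
Lemma eqmB x x' y y' : eqm Q x x' -> eqm Q y y' -> eqm Q (x - y) (x' - y').
Proof. by move=> h1 h2; apply: eqmD => //; apply: eqmN. Qed.
Lemma eqm0 x : eqm Q x 0 <-> Q x. Proof. by rewrite /eqm subr0. Qed.
Lemma eqm_in x y : eqm Q x y -> Q y -> Q x.
Proof. by rewrite /eqm => h hy; rewrite -(subrK y x); apply: ssD. Qed.
End Eqm.

Lemma eqm_mono Q N x y : (forall z, Q z -> N z) -> eqm Q x y -> eqm N x y.
Proof. by move=> h /h. Qed.

Lemma subsp_spn s : subsp (spn s).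
Proof. split; [exact: spn0 | exact: spnD | move=> c x; exact: spnZ]. Qed.

Lemma sub_fd s Q M : subsp Q -> subsp M -> spans s Q M ->
  exists s', [/\ allin M s', (size s' <= size s)%N & spans s' Q M].
Proof.
move=> hQ; elim: s M => [|a s IH] M hM hs.
  by exists [::]; split.
pose M' y := M y /\ exists z, spn s z /\ Q (y - z).
have hM' : subsp M'.
  split.
  - split; first exact: ss0 hM.
    by exists 0; split; [exact: spn0 | rewrite subr0; exact: ss0].
  - move=> x y [hx [z1 [h1 q1]]] [hy [z2 [h2 q2]]]; split; first exact: ssD.
    by exists (z1 + z2); split; [exact: spnD | exact: (eqmD hQ q1 q2)].
  - move=> c x [hx [z [hz q]]]; split; first exact: ssZ.
    by exists (c *: z); split; [exact: spnZ | exact: (eqmZ hQ c q)].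
have [s'' [hall hsz hsp]] := IH M' hM' (fun y hy => hy.2).
case: (classic (exists y0 k z, [/\ M y0, k != 0, spn s z & Q (y0 - (k *: a + z))])).
  case=> y0 [k [z [hy0 hk hz hq]]].
  exists (y0 :: s''); split => //=.
  - by split=> //; apply: allin_impl hall => x [].
  move=> y hy; have [w [/spn_cons [k' [z' [hz' ->]]] hq']] := hs y hy.
  pose c := k' / k.
  have hy1 : M' (y - c *: y0).
    split; first by apply: ssB => //; apply: ssZ.
    exists (z' - c *: z); split; first by apply: spnB => //; apply: spnZ.
    apply: (eqm_trans hQ (y := (k' *: a + z') - c *: (k *: a + z))).
      by apply: eqmB => //; apply: eqmZ.
    apply: eqm_eq => //.
    by rewrite scalerDr scalerA divfK // opprD addrACA subrr add0r.
  have [w' [hw' hq'']] := hsp _ hy1.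
  exists (c *: y0 + w'); split; first by apply/spn_cons; exists c, w'.
  apply: (eqm_trans hQ (y := c *: y0 + (y - c *: y0))).
    by apply: eqm_eq => //; rewrite addrC subrK.
  by apply: eqmD => //; apply: eqm_refl.
move=> hno; exists s''; split => //.
- by apply: allin_impl hall => x [].
- by apply: leqW.
move=> y hy; apply: hsp; split=> //.
have [w [/spn_cons [k' [z' [hz' hw]]] hq']] := hs y hy.
exists z'; split=> //.
have hk : k' = 0.
  apply/eqP/negP => hk; apply: hno.
  exists y, k', z'; split=> //; first by apply/negP.
  by move: hq'; rewrite hw.
by move: hq'; rewrite hw hk scale0r add0r.
Qed.


Lemma drop_sp s N (c : 'I_(size s) -> K) : subsp N ->
  (exists i, c i != 0) -> N (\sum_(i < size s) c i *: s`_i) ->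
  exists s', [/\ (size s' < size s)%N, (forall P, allin P s -> allin P s') &
     forall x, spn s x -> exists z, spn s' z /\ N (x - z)].
Proof.
move=> hN; elim: s c => [|a s IH] c /=; first by case=> -[].
move=> hc; rewrite big_ord_recl /=.
set r := \sum_(i < size s) _.
have hr : spn s r by exists (fun i => c (lift ord0 i)).
case: (eqVneq (c ord0) 0) => h0.
  rewrite h0 scale0r add0r => hNr.
  have [s'' [hsz hP hsp]] : exists s', [/\ (size s' < size s)%N,
     (forall P, allin P s -> allin P s') &
     forall x, spn s x -> exists z, spn s' z /\ N (x - z)].
    apply: (IH (fun i => c (lift ord0 i))) => //.
    case: hc => i; case: (unliftP ord0 i) => [j ->|->]; last by rewrite h0 eqxx.
    by move=> h; exists j.
  exists (a :: s''); split => //=.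
  - by move=> P [ha /hP]; split.
  move=> x /spn_cons [k [z [hz ->]]]; have [z' [hz' hq]] := hsp z hz.
  exists (k *: a + z'); split; first by apply/spn_cons; exists k, z'.
  by apply: (eqmD hN) => //; apply: eqm_refl.
move=> hNa; exists s; split => //.
- by move=> P [].
move=> x /spn_cons [k [z [hz ->]]].
exists (k *: (- (c ord0)^-1 *: r) + z); split.
  by apply: spnD => //; apply: spnZ; apply: spnZ.
apply: (eqmD hN); last by apply: eqm_refl.
apply: (eqmZ hN); rewrite /eqm scaleNr opprK -[X in X + _](scale1r a) -(mulVf h0).
by rewrite -scalerA -scalerDr; apply: ssZ.
Qed.

Lemma min_nat (P : nat -> Prop) : (exists n, P n) ->
  exists n, P n /\ forall m, P m -> (n <= m)%N.
Proof.
move=> hex.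
pose pb n := if excluded_middle_informative (P n) then true else false.
have hpb n : pb n = true <-> P n.
  by rewrite /pb; case: excluded_middle_informative.
have hex' : exists n, pb n by case: hex => n /hpb h; exists n.
case: (ex_minnP hex') => n /hpb hn hmin; exists n; split=> // m /hpb.
exact: hmin.
Qed.

Definition fd Q P := exists s, spans s Q P.

Lemma spans_trans s Q N P : subsp N -> (forall x, Q x -> N x) ->
  spans s Q P -> spans s N P.
Proof. by move=> hN hQN h x /h [z [hz hq]]; exists z; split=> //; apply: hQN. Qed.

Lemma min_basis Q P : subsp Q -> subsp P -> fd Q P ->
  exists s, [/\ allin P s, spans s Q P & forall t, spans t Q P -> (size s <= size t)%N].
Proof.
move=> hQ hP hfd.
have [d [[t [<- ht]] hmin]] :
    exists d, (exists t, size t = d /\ spans t Q P) /\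
      forall m, (exists t, size t = m /\ spans t Q P) -> (d <= m)%N.
  by apply: min_nat; case: hfd => t ht; exists (size t), t.
have [s [hall hsz hs]] := sub_fd hQ hP ht.
exists s; split => // u hu.
by apply: leq_trans hsz _; apply: hmin; exists u.
Qed.

Lemma min_indep s Q P : subsp Q -> spans s Q P ->
  (forall t, spans t Q P -> (size s <= size t)%N) ->
  forall c : 'I_(size s) -> K, Q (\sum_(i < size s) c i *: s`_i) -> forall i, c i = 0.
Proof.
move=> hQ hs hmin c hc i; apply/eqP/negP => hci.
have [s' [hsz _ hsp]] := drop_sp hQ (ex_intro _ i (introN idP hci)) hc.
suff : (size s <= size s')%N by rewrite leqNgt hsz.
apply: hmin => x /hs [z [hz hq]]; have [z' [hz' hq']] := hsp z hz.
by exists z'; split=> //; apply: (eqm_trans hQ hq hq').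
Qed.

Lemma strict_sp s Q N P w : subsp Q -> subsp N -> (forall x, Q x -> N x) ->
  spans s Q P -> P w -> N w -> ~ Q w ->
  exists s', (size s' < size s)%N /\ spans s' N P.
Proof.
move=> hQ hN hQN hs hw hNw hQw.
have [z [[c hz] hq]] := hs w hw.
have hc : exists i, c i != 0.
  apply: NNPP => hno; apply: hQw; apply: (eqm_in hQ hq).
  suff -> : z = 0 by apply: ss0.
  rewrite hz big1 // => i _.
  have -> : c i = 0 by apply/eqP; apply: contraT => h; exfalso; apply: hno; exists i.
  by rewrite scale0r.
have hNz : N (\sum_(i < size s) c i *: s`_i).
  by rewrite -hz; apply: (eqm_in hN (eqm_sym hN (hQN _ hq))).
have [s' [hsz _ hsp]] := drop_sp hN hc hNz.
exists s'; split=> // x /hs [y [hy hqy]]; have [y' [hy' hq']] := hsp y hy.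
by exists y'; split=> //; apply: (eqm_trans hN (hQN _ hqy) hq').
Qed.

End LinAlg.

Section Mod.
Variables (K : fieldType) (A : algType K) (G : A -> Prop).
Hypothesis hG : is_subalg G.
Implicit Types (s t : seq A) (P Q N M R m n J : A -> Prop).

Lemma G1 : G 1. Proof. by case: hG. Qed.
Lemma GD x y : G x -> G y -> G (x + y). Proof. by case: hG => _ h _ _; apply: h. Qed.
Lemma GM x y : G x -> G y -> G (x * y). Proof. by case: hG => _ _ h _; apply: h. Qed.
Lemma GZ (c : K) x : G x -> G (c *: x). Proof. by case: hG => _ _ _ h; apply: h. Qed.
Lemma G0 : G 0. Proof. by rewrite -(scale0r 1); apply: GZ; apply: G1. Qed.
Lemma Gsubsp : subsp G. Proof. split; [exact: G0 | exact: GD | exact: GZ]. Qed.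
Lemma GN x : G x -> G (- x). Proof. by move=> h; exact: (ssN Gsubsp h). Qed.
Lemma GB x y : G x -> G y -> G (x - y). Proof. by move=> h h'; exact: (ssB Gsubsp h h'). Qed.
Lemma Gsc (c : K) : G (c *: 1). Proof. by apply: GZ; apply: G1. Qed.

Lemma lsub0 N : lsub G N -> N 0. Proof. by case. Qed.
Lemma lsubD N x y : lsub G N -> N x -> N y -> N (x + y). Proof. by case=> _ h _; apply: h. Qed.
Lemma lsubM N g x : lsub G N -> G g -> N x -> N (g * x). Proof. by case=> _ _ h; apply: h. Qed.
Lemma lsubZ N (c : K) x : lsub G N -> N x -> N (c *: x).
Proof. by move=> hN hx; rewrite -[x]mul1r scalerAl; apply: lsubM => //; apply: Gsc. Qed.
Lemma lsub_subsp N : lsub G N -> subsp N.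
Proof. move=> h; split; [exact: lsub0 | by move=> x y; apply: lsubD | by move=> c x; apply: lsubZ]. Qed.
Lemma lsubN N x : lsub G N -> N x -> N (- x). Proof. by move/lsub_subsp=> h h'; exact: (ssN h h'). Qed.
Lemma lsubB N x y : lsub G N -> N x -> N y -> N (x - y). Proof. by move/lsub_subsp=> h h' h''; exact: (ssB h h' h''). Qed.

Lemma rsubM N g x : rsub G N -> G g -> N x -> N (x * g). Proof. by case=> _ _ h; apply: h. Qed.

Lemma Glsub : lsub G G. Proof. split; [exact: G0 | exact: GD | exact: GM]. Qed.

Lemma eqm_lsubM N g x y : lsub G N -> G g -> eqm N x y -> eqm N (g * x) (g * y).
Proof. by rewrite /eqm -mulrBr => hN hg h; apply: lsubM. Qed.

Lemma cfs_G m x : cfs G m -> m x -> G x. Proof. by case=> -[[h _] _] _ _ _; apply: h. Qed.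
Lemma cfs_l m : cfs G m -> lsub G m. Proof. by case=> -[[_ h] _] _ _ _. Qed.
Lemma cfs_r m : cfs G m -> rsub G m. Proof. by case=> -[_ [_ h]] _ _ _. Qed.
Lemma cfs_n1 m : cfs G m -> ~ m 1. Proof. by case. Qed.
Lemma cfs_ss m : cfs G m -> subsp m. Proof. by move/cfs_l/lsub_subsp. Qed.

Lemma pred_ext (P1 P2 : A -> Prop) : (forall x, P1 x <-> P2 x) -> P1 = P2.
Proof.
move=> h; apply: functional_extensionality => x.
by apply: propositional_extensionality.
Qed.

Lemma cfs0 m : cfs G m -> m 0. Proof. by move/cfs_l/lsub0. Qed.
Lemma cfsD m x y : cfs G m -> m x -> m y -> m (x + y). Proof. by move/cfs_l=> h; apply: lsubD. Qed.
Lemma cfsMl m g x : cfs G m -> G g -> m x -> m (g * x). Proof. by move/cfs_l=> h; apply: lsubM. Qed.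
Lemma cfsMr m g x : cfs G m -> G g -> m x -> m (x * g). Proof. by move/cfs_r=> h; apply: rsubM. Qed.
Lemma cfs_two m : cfs G m -> two_ideal G m. Proof. by case. Qed.

Lemma two_idealI (J : A -> Prop) : (forall x, J x -> G x) -> J 0 ->
  (forall x y, J x -> J y -> J (x + y)) -> (forall g x, G g -> J x -> J (g * x)) ->
  (forall g x, G g -> J x -> J (x * g)) -> two_ideal G J.
Proof. by move=> h1 h2 h3 h4 h5; split; split=> //; split. Qed.

Lemma cfs_eq m n : cfs G m -> cfs G n -> (forall x, m x -> n x) -> m = n.
Proof.
move=> hm hn hmn; apply: pred_ext => x; split; first exact: hmn.
case: hm => _ _ hmax _; case: (hmax n (cfs_two hn) hmn); first by apply.
by move/(cfs_n1 hn).
Qed.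

Lemma cfs_comax m n : cfs G m -> cfs G n -> m <> n ->
  exists a b, [/\ m a, n b & 1 = a + b].
Proof.
move=> hm hn hmn.
pose J x := exists a b, [/\ m a, n b & x = a + b].
have hJ : two_ideal G J.
  apply: two_idealI.
  - by move=> x [a [b [ha hb ->]]]; apply: GD; [apply: (cfs_G hm) | apply: (cfs_G hn)].
  - by exists 0, 0; rewrite addr0; split=> //; apply: cfs0.
  - move=> x y [a [b [ha hb ->]]] [a' [b' [ha' hb' ->]]].
    by exists (a + a'), (b + b'); split; [apply: cfsD | apply: cfsD | rewrite addrACA].
  - move=> g x hg [a [b [ha hb ->]]]; exists (g * a), (g * b).
    by rewrite mulrDr; split=> //; apply: cfsMl.
  - move=> g x hg [a [b [ha hb ->]]]; exists (a * g), (b * g).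
    by rewrite mulrDl; split=> //; apply: cfsMr.
have hnJ x : n x -> J x by move=> hx; exists 0, x; rewrite add0r; split=> //; apply: cfs0.
have := hn; case=> _ _ hmaxn _.
case: (hmaxn J hJ hnJ) => [hJn|//].
have hmn' x : m x -> n x.
  by move=> hx; apply: hJn; exists x, 0; rewrite addr0; split=> //; apply: cfs0.
by case: hmn; apply: cfs_eq.
Qed.


Lemma widen_lift j (i : 'I_j) : widen_ord (leqnSn j) i = lift ord_max i.
Proof. by apply: ord_inj; rewrite lift_max. Qed.

Lemma prodset0 n : prodset n 0 1.
Proof. by exists (fun _ => 0); split; [case | rewrite big_ord0]. Qed.

Lemma prodset_cons n j a p : n a -> prodset n j p -> prodset n j.+1 (a * p).
Proof.
move=> ha [q [hq ->]].
exists (fun i : 'I_j.+1 => if unlift ord0 i is Some k then q k else a); split.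
  by move=> i; case: (unlift ord0 i).
by rewrite big_ord_recl unlift_none; congr (_ * _); apply: eq_bigr => i _; rewrite liftK.
Qed.

Lemma prodset_rcons n j a p : n a -> prodset n j p -> prodset n j.+1 (p * a).
Proof.
move=> ha [q [hq ->]].
exists (fun i : 'I_j.+1 => if unlift ord_max i is Some k then q k else a); split.
  by move=> i; case: (unlift ord_max i).
rewrite big_ord_recr unlift_none; congr (_ * _); apply: eq_bigr => i _.
by rewrite widen_lift liftK.
Qed.

Lemma prodset_invl n j x : prodset n j.+1 x -> exists a p, [/\ n a, prodset n j p & x = a * p].
Proof.
case=> q [hq ->]; rewrite big_ord_recl.
exists (q ord0), (\prod_(i < j) q (lift ord0 i)); split=> //.
by exists (fun i => q (lift ord0 i)).
Qed.

Lemma prodset_invr n j x : prodset n j.+1 x -> exists a p, [/\ n a, prodset n j p & x = p * a].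
Proof.
case=> q [hq ->]; rewrite big_ord_recr.
exists (q ord_max), (\prod_(i < j) q (widen_ord (leqnSn j) i)); split=> //.
by exists (fun i => q (widen_ord (leqnSn j) i)).
Qed.

Lemma prodset_G n j x : (forall y, n y -> G y) -> prodset n j x -> G x.
Proof.
move=> hn; elim: j x => [|j IH] x.
  by case=> q [_ ->]; rewrite big_ord0; apply: G1.
by case/prodset_invl=> a [p [ha hp ->]]; apply: GM; [apply: hn | apply: IH].
Qed.

Lemma prodset_mem n j x : cfs G n -> prodset n j.+1 x -> n x.
Proof.
move=> hn /prodset_invl [a [p [ha hp ->]]].
by apply: cfsMr => //; apply: (prodset_G (fun y hy => cfs_G hn hy)) hp.
Qed.

Lemma prodset_mulr n j p g : cfs G n -> prodset n j.+1 p -> G g -> prodset n j.+1 (p * g).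
Proof.
move=> hn /prodset_invr [a [q [ha hq ->]]] hg.
by rewrite -mulrA; apply: prodset_rcons => //; apply: cfsMr.
Qed.

Definition PS n j u := exists r (p : 'I_r -> A), (forall i, prodset n j (p i)) /\ u = \sum_(i < r) p i.

Lemma PS1 n : PS n 0 1.
Proof. by exists 1%N, (fun _ => 1); split=> [i|]; [apply: prodset0 | rewrite big_ord1]. Qed.

Lemma PS_rmul n j u a : PS n j u -> n a -> PS n j.+1 (u * a).
Proof.
case=> r [p [hp ->]] ha; exists r, (fun i => p i * a); split; last by rewrite mulr_suml.
by move=> i; apply: prodset_rcons.
Qed.

Lemma PS_G n j u : (forall y, n y -> G y) -> PS n j u -> G u.
Proof.
move=> hn [r [p [hp ->]]]; apply: (big_ind G G0 GD) => i _.
exact: prodset_G (hp i).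
Qed.

Lemma PS_kill n j u (Pr : A -> Prop) y : Pr 0 -> (forall a b, Pr a -> Pr b -> Pr (a + b)) ->
  (forall p, prodset n j p -> Pr (p * y)) -> PS n j u -> Pr (u * y).
Proof.
move=> h0 hD hp [r [q [hq ->]]]; rewrite mulr_suml.
by apply: (big_ind Pr h0 hD) => i _; apply: hp.
Qed.

Lemma comax_pow n (J : A -> Prop) : (forall y, n y -> G y) ->
  (forall x, J x -> G x) -> (forall x y, J x -> J y -> J (x + y)) ->
  (forall g x, G g -> J x -> J (g * x)) -> (forall g x, G g -> J x -> J (x * g)) ->
  (exists a b, [/\ n a, J b & 1 = a + b]) ->
  forall j, exists u v, [/\ PS n j u, J v & 1 = u + v].
Proof.
move=> hnG hJG hJD hJl hJr [a [b [ha hb hab]]]; elim=> [|j [u [v [hu hv huv]]]].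
  exists 1, (0 * b); split; [exact: PS1 | | by rewrite mul0r addr0].
  by apply: hJl => //; apply: G0.
exists (u * a), (u * b + (v * a + v * b)); split.
- exact: PS_rmul.
- apply: (hJD); first by apply: (hJl) => //; apply: PS_G hu.
  by apply: (hJD); apply: (hJr) => //; [apply: hnG | apply: hJG].
by rewrite addrA -mulrDr -mulrDr -hab !mulr1 -huv.
Qed.

End Mod.

Section Ann.
Variables (K : fieldType) (A : algType K) (G : A -> Prop).
Hypothesis hG : is_subalg G.
Implicit Types (s : seq A) (P Q N M R m n J : A -> Prop).

Definition ann Q N g := G g /\ forall y, N y -> Q (g * y).

Lemma simple_gen Q N t : lsub G Q -> lsub G N -> simple_pq G Q N -> N t -> ~ Q t ->
  forall y, N y -> exists g, G g /\ eqm Q y (g * t).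
Proof.
move=> hQ hN [hQN _ hsim] ht hQt; have hQs := lsub_subsp hG hQ.
pose N' y := exists g, G g /\ eqm Q y (g * t).
have hN' : lsub G N'.
  split.
  - exists 0; split; first exact: G0 hG.
    by rewrite mul0r; apply: eqm_refl; exact: hQs.
  - move=> x y [g [hg hx]] [g' [hg' hy]]; exists (g + g'); split; first exact: GD.
    by rewrite mulrDl; apply: eqmD => //; exact: hQs.
  - move=> g x hg [g' [hg' hx]]; exists (g * g'); split; first exact: GM.
    by rewrite -mulrA; exact: (eqm_lsubM hQ hg hx).
have hQN' x : Q x -> N' x.
  move=> hx; exists 0; split; first exact: G0 hG.
  by rewrite mul0r; apply/eqm0 => //; exact: hQs.
have hN'N x : N' x -> N x.
  case=> g [hg hx]; rewrite -(subrK (g * t) x); apply: (lsubD hN); first exact: hQN.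
  exact: (lsubM hN).
case: (hsim N' hN' hQN' hN'N) => [h|h //].
exfalso; apply: hQt; apply: h; exists 1; split; first exact: G1 hG.
by rewrite mul1r; apply: eqm_refl; exact: hQs.
Qed.


Lemma ann_two Q N : lsub G Q -> lsub G N -> two_ideal G (ann Q N).
Proof.
move=> hQ hN; apply: two_idealI.
- by move=> x [].
- split; first exact: G0 hG.
  by move=> y _; rewrite mul0r; apply: lsub0 hQ.
- move=> x y [hx hx'] [hy hy']; split; first exact: GD.
  by move=> z hz; rewrite mulrDl; apply: (lsubD hQ); [apply: hx' | apply: hy'].
- move=> g x hg [hx hx']; split; first exact: GM.
  by move=> z hz; rewrite -mulrA; apply: (lsubM hQ) => //; apply: hx'.
- move=> g x hg [hx hx']; split; first exact: GM.
  by move=> z hz; rewrite -mulrA; apply: hx'; apply: (lsubM hN).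
Qed.

Lemma two_G J x : two_ideal G J -> J x -> G x. Proof. by case=> -[h _] _; apply: h. Qed.
Lemma two_l J : two_ideal G J -> lsub G J. Proof. by case=> -[_ h] _. Qed.
Lemma two_r J : two_ideal G J -> rsub G J. Proof. by case=> _ [_ h]. Qed.

Lemma ann_fix Q N J : lsub G Q -> lsub G N -> simple_pq G Q N -> two_ideal G J ->
  (exists g0 y0, [/\ J g0, N y0 & ~ Q (g0 * y0)]) ->
  forall t, N t -> exists f, J f /\ eqm Q (f * t) t.
Proof.
move=> hQ hN hsim hJ [g0 [y0 [hg0 hy0 hQ0]]] t ht.
have hQs := lsub_subsp hG hQ.
have [hQN _ hs] := hsim.
case: (classic (Q t)) => hQt.
  exists 0; split; first exact: (lsub0 (two_l hJ)).
  by rewrite mul0r /eqm sub0r; apply: (lsubN hG hQ).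
pose N' y := exists j q, [/\ J j, Q q & y = j * t + q].
have hN' : lsub G N'.
  split.
  - exists 0, 0; split; [exact: (lsub0 (two_l hJ)) | exact: (lsub0 hQ) | by rewrite mul0r addr0].
  - move=> x y [j [q [hj hq ->]]] [j' [q' [hj' hq' ->]]].
    exists (j + j'), (q + q'); split; [exact: (lsubD (two_l hJ)) | exact: (lsubD hQ) |].
    by rewrite mulrDl addrACA.
  - move=> g x hg [j [q [hj hq ->]]]; exists (g * j), (g * q); split.
    + exact: (lsubM (two_l hJ)).
    + exact: (lsubM hQ).
    + by rewrite mulrDr mulrA.
have hQN' x : Q x -> N' x.
  by move=> hx; exists 0, x; split; [exact: (lsub0 (two_l hJ)) | | rewrite mul0r add0r].
have hN'N x : N' x -> N x.
  case=> j [q [hj hq ->]]; apply: (lsubD hN); last exact: hQN.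
  by apply: (lsubM hN) => //; apply: two_G hj.
case: (hs N' hN' hQN' hN'N) => h.
  exfalso; apply: hQ0.
  have [g [hg hyg]] := simple_gen hQ hN hsim ht hQt hy0.
  apply: (eqm_in hQs (eqm_lsubM hQ (two_G hJ hg0) hyg)).
  rewrite mulrA; apply: h; exists (g0 * g), 0; split.
  - exact: (rsubM (two_r hJ)).
  - exact: (lsub0 hQ).
  - by rewrite addr0.
have [j [q [hj hq htq]]] := h t ht.
exists j; split=> //.
by rewrite /eqm {2}htq opprD addrA subrr sub0r; apply: (lsubN hG hQ).
Qed.


Lemma spn_fix Q e s : subsp Q -> allin (fun t => eqm Q (e * t) t) s ->
  forall z, spn s z -> eqm Q (e * z) z.
Proof.
move=> hQ; elim: s => [|a s IH] /=.
  by move=> _ z /spn_nil ->; rewrite mulr0; apply: eqm_refl.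
case=> ha /IH hz z /spn_cons [k [z' [hz' ->]]].
rewrite mulrDr -scalerAr; apply: (eqmD hQ); last exact: hz.
exact: (eqmZ hQ).
Qed.

Lemma ann_max Q N J : lsub G Q -> lsub G N -> simple_pq G Q N -> fd Q N ->
  two_ideal G J -> (forall x, ann Q N x -> J x) ->
  (forall x, J x -> ann Q N x) \/ J 1.
Proof.
move=> hQ hN hsim hfd hJ hannJ.
have hQs := lsub_subsp hG hQ; have hNs := lsub_subsp hG hN.
case: (classic (forall x, J x -> ann Q N x)) => [h|h]; [by left | right].
have [g0 hg0] := not_all_ex_not _ _ h.
have [hJg0 hng0] := imply_to_and _ _ hg0.
have hex : exists g0 y0, [/\ J g0, N y0 & ~ Q (g0 * y0)].
  apply: NNPP => hno; apply: hng0; split; first exact: two_G hJg0.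
  by move=> y hy; apply: NNPP => hq; apply: hno; exists g0, y.
have hfix := ann_fix hQ hN hsim hJ hex.
have hJl := two_l hJ; have hJr := two_r hJ.
have build : forall s, allin N s -> exists e, J e /\ allin (fun t => eqm Q (e * t) t) s.
  elim=> [|t s IH] /=.
    by move=> _; exists 0; split=> //; apply: (lsub0 hJl).
  case=> ht /IH [e [he hall]].
  have heG := two_G hJ he.
  have hu : N (t - e * t) by apply: (lsubB hG hN) => //; apply: (lsubM hN).
  have [f [hf hfu]] := hfix _ hu.
  have hfG := two_G hJ hf.
  exists (e + f - f * e); split.
    apply: (lsubB hG hJl); first exact: (lsubD hJl).
    exact: (rsubM hJr).
  have hexp x : (e + f - f * e) * x = e * x + f * (x - e * x).
    by rewrite mulrBr mulrBl mulrDl mulrA addrA.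
  split.
    rewrite hexp; apply: (eqm_trans hQs (y := e * t + (t - e * t))).
      by apply: (eqmD hQs) => //; apply: (eqm_refl hQs).
    by apply: eqm_eq => //; rewrite addrC subrK.
  apply: allin_impl hall => x hx.
  rewrite hexp; apply: (eqm_trans hQs (y := e * x + 0)); last by rewrite addr0.
  apply: (eqmD hQs); first exact: (eqm_refl hQs).
  rewrite /eqm subr0; apply: (lsubM hQ) => //.
  by move: (eqm_sym hQs hx).
have [s0 hs0] := hfd; have [s [hsN _ hsp]] := sub_fd hQs hNs hs0.
have [e [he hall]] := build s hsN.
have heG := two_G hJ he.
have hez := spn_fix hQs hall.
have hey : forall y, N y -> eqm Q (e * y) y.
  move=> y hy; have [z [hz hyz]] := hsp y hy.
  apply: (eqm_trans hQs (y := z)); last exact: (eqm_sym hQs hyz).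
  apply: (eqm_trans hQs (y := e * z)); last exact: hez.
  by rewrite /eqm -mulrBr; apply: (lsubM hQ).
have h1e : J (1 - e).
  apply: hannJ; split; first by apply: (GB hG) => //; apply: (G1 hG).
  by move=> y hy; rewrite mulrBl mul1r; apply: (eqm_sym hQs); apply: hey.
by rewrite -(subrK e 1); apply: (lsubD hJl).
Qed.


Lemma spn_kill Q h s : subsp Q -> allin (fun t => Q (h * t)) s ->
  forall z, spn s z -> Q (h * z).
Proof.
move=> hQ; elim: s => [|a s IH] /=.
  by move=> _ z /spn_nil ->; rewrite mulr0; apply: ss0.
case=> ha /IH hz z /spn_cons [k [z' [hz' ->]]].
by rewrite mulrDr -scalerAr; apply: (ssD hQ); [apply: (ssZ hQ) | apply: hz].
Qed.

Definition Iann Q s g := G g /\ allin (fun t => Q (g * t)) s.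

Lemma Iann_subsp Q s : lsub G Q -> subsp (Iann Q s).
Proof.
move=> hQ; have hQs := lsub_subsp hG hQ; split.
- split; first exact: G0 hG.
  by apply: allin_all => t; rewrite mul0r; apply: ss0.
- move=> x y [hx ax] [hy ay]; split; first exact: GD.
  by apply: allin2 ax ay => t h1 h2; rewrite mulrDl; apply: (ssD hQs).
- move=> c x [hx ax]; split; first exact: GZ.
  by apply: allin_impl ax => t h1; rewrite -scalerAl; apply: (ssZ hQs).
Qed.

Lemma choose_C Q M' a s : subsp Q ->
  (forall y, M' y -> exists g, Iann Q s g /\ eqm Q y (g * a)) ->
  forall sM, allin M' sM -> exists C, allin (Iann Q s) C /\
    forall z, spn sM z -> exists z', spn C z' /\ eqm Q z (z' * a).
Proof.
move=> hQ hM; elim=> [|y sM IH] /=.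
  move=> _; exists [::]; split=> // z /spn_nil ->; exists 0; split; first exact: spn0.
  by rewrite mul0r; apply: eqm_refl.
case=> /hM [g [hg hyg]] /IH [C [hC hCz]].
exists (g :: C); split=> //.
move=> z /spn_cons [k [z1 [hz1 ->]]]; have [z' [hz' hq]] := hCz z1 hz1.
exists (k *: g + z'); split; first by apply/spn_cons; exists k, z'.
by rewrite mulrDl -scalerAl; apply: (eqmD hQ) => //; apply: (eqmZ hQ).
Qed.

Lemma ann_codim Q N : lsub G Q -> lsub G N -> fd Q N ->
  exists B, allin G B /\ forall g, G g -> exists z, spn B z /\ ann Q N (g - z).
Proof.
move=> hQ hN hfd.
have hQs := lsub_subsp hG hQ; have hNs := lsub_subsp hG hN.
have [s0 hs0] := hfd; have [s [hsN _ hsp]] := sub_fd hQs hNs hs0.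
suff [B [hB hBz]] : exists B, allin G B /\ forall g, G g -> exists z, spn B z /\ Iann Q s (g - z).
  exists B; split=> // g hg; have [z [hz [hzG hzall]]] := hBz g hg.
  exists z; split=> //; split=> // y hy.
  have [w [hw hyw]] := hsp y hy.
  rewrite -(subrK w y) mulrDr; apply: (ssD hQs); last exact: spn_kill hzall _ hw.
  exact: (lsubM hQ).
move: (s) hsN; elim=> [|a s' IH] /=.
  move=> _; exists [::]; split=> // g hg; exists 0; split; first exact: spn0.
  by rewrite subr0.
case=> haN /IH [B1 [hB1 hB1z]].
have hIs := Iann_subsp s' hQ.
pose M' y := exists g, Iann Q s' g /\ eqm Q y (g * a).
have hM' : subsp M'.
  split.
  - exists 0; split; first exact: (ss0 hIs).
    by rewrite mul0r; apply: eqm_refl.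
  - move=> x y [g [hg hx]] [g' [hg' hy]]; exists (g + g'); split; first exact: (ssD hIs).
    by rewrite mulrDl; apply: (eqmD hQs).
  - move=> c x [g [hg hx]]; exists (c *: g); split; first exact: (ssZ hIs).
    by rewrite -scalerAl; apply: (eqmZ hQs).
have hsM' : spans s0 Q M'.
  move=> y [g [[hg _] hyg]].
  have [z [hz hq]] := hs0 (g * a) (lsubM hN hg haN).
  by exists z; split=> //; apply: (eqm_trans hQs hyg hq).
have [sM [hsM _ hsMsp]] := sub_fd hQs hM' hsM'.
have [C [hC hCz]] := choose_C hQs (fun y (hy : M' y) => hy) hsM.
exists (B1 ++ C); split.
  by apply: allin_cat => //; apply: allin_impl hC => x [].
move=> g hg; have [z1 [hz1 hI1]] := hB1z g hg.
have hM'g : M' ((g - z1) * a) by exists (g - z1); split=> //; apply: eqm_refl.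
have [w [hw hqw]] := hsMsp _ hM'g.
have [z' [hz' hqz']] := hCz w hw.
have hIz' : Iann Q s' z' := ss_spn hIs hC hz'.
exists (z1 + z'); split; first exact: spn_cat.
rewrite opprD addrA; split; first by apply: (GB hG); [case: hI1 | case: hIz'].
split.
  rewrite mulrBl; exact: (eqm_trans hQs hqw hqz').
by case: (ssB hIs hI1 hIz').
Qed.

Lemma ann_cfs Q N : lsub G Q -> lsub G N -> simple_pq G Q N -> fd Q N -> cfs G (ann Q N).
Proof.
move=> hQ hN hsim hfd; split.
- exact: ann_two.
- case: hsim => _ [x [hx hQx]] _ [_ h]; apply: hQx.
  by rewrite -(mul1r x); apply: h.
- by move=> J hJ hsub; apply: ann_max.
have [B [hB hBz]] := ann_codim hQ hN hfd.
exists B; split; first by move=> i; apply: allin_nth.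
by move=> g hg; have [z [[c ->] hz]] := hBz g hg; exists c.
Qed.

End Ann.

Section ExtCons.
Variables (K : fieldType) (A : algType K) (G : A -> Prop).
Hypothesis hG : is_subalg G.
Variables (Q U P : A -> Prop) (b c : seq A).
Hypotheses (hQ : lsub G Q) (hU : lsub G U) (hP : lsub G P).
Hypotheses (hQU : forall x, Q x -> U x) (hUP : forall x, U x -> P x).
Hypotheses (hbU : allin U b) (hbsp : spans b Q U)
  (hbmin : forall t, spans t Q U -> (size b <= size t)%N).
Hypotheses (hcP : allin P c) (hcsp : spans c U P)
  (hcmin : forall t, spans t U P -> (size c <= size t)%N).

Let hQs := lsub_subsp hG hQ.
Let hUs := lsub_subsp hG hU.
Let hPs := lsub_subsp hG hP.

Local Notation sb := (size b).
Local Notation sc := (size c).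
Local Notation d := (sb + sc)%N.

Definition vb (x : 'rV[K]_sb) : A := \sum_(i < sb) x 0 i *: b`_i.
Definition vc (x : 'rV[K]_sc) : A := \sum_(j < sc) x 0 j *: c`_j.
Definition vec (v : 'rV[K]_d) : A := vb (lsubmx v) + vc (rsubmx v).

Lemma vecD v w : vec (v + w) = vec v + vec w.
Proof.
rewrite /vec /vb /vc addrACA -!big_split /=; congr (_ + _); apply: eq_bigr => i _;
by rewrite !mxE scalerDl.
Qed.

Lemma vecZ (k : K) v : vec (k *: v) = k *: vec v.
Proof.
rewrite /vec /vb /vc scalerDr !scaler_sumr; congr (_ + _); apply: eq_bigr => i _;
by rewrite !mxE scalerA.
Qed.

Lemma vec0 : vec 0 = 0.
Proof. by rewrite -(scale0r (0 : 'rV[K]_d)) vecZ scale0r. Qed.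

Lemma vecB v w : vec (v - w) = vec v - vec w.
Proof. by rewrite vecD -scaleN1r vecZ scaleN1r. Qed.

Lemma vec_sum (I : Type) (r : seq I) (F : I -> 'rV[K]_d) :
  vec (\sum_(i <- r) F i) = \sum_(i <- r) vec (F i).
Proof. exact: (big_morph vec vecD vec0). Qed.

Lemma vb_U x : U (vb x).
Proof.
apply: (big_ind U (lsub0 hU) (fun a b => lsubD hU)) => i _.
by apply: (lsubZ hG _ hU); apply: allin_nth.
Qed.

Lemma vc_P x : P (vc x).
Proof.
apply: (big_ind P (lsub0 hP) (fun a b => lsubD hP)) => i _.
by apply: (lsubZ hG _ hP); apply: allin_nth.
Qed.

Lemma vec_P v : P (vec v).
Proof. by apply: (lsubD hP); [apply: hUP; apply: vb_U | apply: vc_P]. Qed.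

Lemma vec_U v : U (vec v) <-> rsubmx v = 0.
Proof.
split=> [hv|hv]; last first.
  rewrite /vec hv /vc big1 ?addr0; first exact: vb_U.
  by move=> i _; rewrite mxE scale0r.
have hc : U (vc (rsubmx v)).
  by rewrite -(addKr (vb (lsubmx v)) (vc _)); apply: (lsubD hU); [apply: (lsubN hG hU); apply: vb_U|].
have h0 := min_indep hUs hcsp hcmin hc.
by apply/rowP => j; rewrite [RHS]mxE h0.
Qed.

Lemma vec_Q v : Q (vec v) -> v = 0.
Proof.
move=> hv; have hr : rsubmx v = 0 by apply/vec_U; apply: hQU.
have hb : Q (vb (lsubmx v)).
  by move: hv; rewrite /vec hr /vc big1 ?addr0 // => i _; rewrite mxE scale0r.
have h0 := min_indep hQs hbsp hbmin hb.
have hl : lsubmx v = 0 by apply/rowP => j; rewrite [RHS]mxE h0.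
by rewrite -(hsubmxK v) hl hr row_mx0.
Qed.

Lemma vec_inj v w : eqm Q (vec v) (vec w) -> v = w.
Proof. by rewrite /eqm -vecB => /vec_Q /eqP; rewrite subr_eq0 => /eqP. Qed.

Lemma vec_onto y : P y -> exists v, eqm Q y (vec v).
Proof.
move=> hy; have [z [[gm hz] hyz]] := hcsp hy.
have [zb [[bt hzb] hq]] := hbsp hyz.
exists (row_mx (\row_i bt i) (\row_j gm j)).
rewrite /vec row_mxKl row_mxKr.
have -> : vb (\row_i bt i) = zb by rewrite hzb /vb; apply: eq_bigr => i _; rewrite mxE.
have -> : vc (\row_j gm j) = z by rewrite hz /vc; apply: eq_bigr => i _; rewrite mxE.
apply: (eqm_trans hQs (y := (y - z) + z)); first by apply: (eqm_eq hQs); rewrite subrK.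
by apply: (eqmD hQs) => //; apply: (eqm_refl hQs).
Qed.


Definition coord (y : A) : 'rV[K]_d :=
  match excluded_middle_informative (exists v, eqm Q y (vec v)) with
  | left h => proj1_sig (constructive_indefinite_description _ h)
  | right _ => 0
  end.

Lemma coordP y : P y -> eqm Q y (vec (coord y)).
Proof.
move=> hy; rewrite /coord; case: excluded_middle_informative => [h|h].
  exact: (proj2_sig (constructive_indefinite_description _ h)).
by exfalso; apply: h; apply: vec_onto.
Qed.

Definition Mg (g : A) : 'M[K]_d := \matrix_(k < d) coord (g * vec 'e_k).
Definition act (g : A) : 'End('rV[K]_d) := linfun (mulmxr (Mg g)).

Lemma actE g v : act g v = v *m Mg g.
Proof. by rewrite /act lfunE. Qed.

Lemma eqm_sum (I : Type) (r : seq I) (F F' : I -> A) :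
  (forall i, eqm Q (F i) (F' i)) -> eqm Q (\sum_(i <- r) F i) (\sum_(i <- r) F' i).
Proof.
move=> h; apply: (big_ind2 (eqm Q)) => //; first exact: (eqm_refl hQs).
by move=> x1 x2 y1 y2; apply: (eqmD hQs).
Qed.

Lemma act_spec g v : G g -> eqm Q (vec (act g v)) (g * vec v).
Proof.
move=> hg; rewrite actE mulmx_sum_row vec_sum.
rewrite {2}(row_sum_delta v) vec_sum mulr_sumr.
apply: eqm_sum => k; rewrite !vecZ rowK -scalerAr.
apply: (eqmZ hQs); apply: (eqm_sym hQs); apply: coordP.
by apply: (lsubM hP) => //; apply: vec_P.
Qed.

Lemma act_unique g v w : G g -> eqm Q (vec w) (g * vec v) -> act g v = w.
Proof.
move=> hg h; apply: vec_inj; apply: (eqm_trans hQs (act_spec v hg)).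
exact: (eqm_sym hQs).
Qed.

Lemma act_Gmod : is_Gmod G act.
Proof.
split.
- apply/lfunP => v; rewrite id_lfunE; apply: act_unique; first exact: (G1 hG).
  by rewrite mul1r; apply: (eqm_refl hQs).
- move=> x y hx hy; apply/lfunP => v; rewrite comp_lfunE.
  apply: act_unique; first exact: (GM hG).
  apply: (eqm_trans hQs (act_spec _ hx)); rewrite -mulrA.
  by apply: (eqm_lsubM hQ hx); apply: act_spec.
- move=> x y hx hy; apply/lfunP => v; rewrite add_lfunE.
  apply: act_unique; first exact: (GD hG).
  by rewrite vecD mulrDl; apply: (eqmD hQs); apply: act_spec.
- move=> k x hx; apply/lfunP => v; rewrite scale_lfunE.
  apply: act_unique; first exact: (GZ hG).
  by rewrite vecZ -scalerAl; apply: (eqmZ hQs); apply: act_spec.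
Qed.


Definition Pr : 'M[K]_(d, sc) := col_mx 0 1%:M.
Definition UE : {vspace 'rV[K]_d} := lker (linfun (mulmxr Pr)).

Lemma UE_U v : v \in UE <-> U (vec v).
Proof.
rewrite memv_ker lfunE /= /Pr -{1}(hsubmxK v) mul_row_col mulmx0 mulmx1 add0r.
by rewrite vec_U; split=> /eqP.
Qed.

Definition NA (N : {vspace 'rV[K]_d}) y := exists v, v \in N /\ eqm Q y (vec v).

Lemma NA_lsub N : Gsubmod G act N -> lsub G (NA N).
Proof.
move=> hN; split.
- by exists 0; rewrite mem0v vec0; split=> //; apply: (eqm_refl hQs).
- move=> x y [v [hv hx]] [w [hw hy]]; exists (v + w); split; first exact: memvD.
  by rewrite vecD; apply: (eqmD hQs).
- move=> g x hg [v [hv hx]]; exists (act g v); split.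
    by apply: (subvP (hN g hg)); apply: memv_img.
  apply: (eqm_trans hQs (eqm_lsubM hQ hg hx)).
  exact: (eqm_sym hQs (act_spec _ hg)).
Qed.

Lemma NA_Q N x : Q x -> NA N x.
Proof. by move=> hx; exists 0; rewrite mem0v vec0; split=> //; rewrite /eqm subr0. Qed.

Lemma NA_P N x : NA N x -> P x.
Proof.
case=> v [_ hx]; rewrite -(subrK (vec v) x); apply: (lsubD hP); last exact: vec_P.
by apply: hUP; apply: hQU.
Qed.

Lemma NA_vec N v : NA N (vec v) -> v \in N.
Proof. by case=> w [hw /vec_inj ->]. Qed.

Lemma eqm_QU x y : eqm Q x y -> U y -> U x.
Proof. by move=> h hy; apply: (eqm_in hUs _ hy); apply: hQU. Qed.

Lemma UE_stable : Gsubmod G act UE.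
Proof.
move=> g hg; apply/subvP => w /memv_imgP [v /UE_U hv ->]; apply/UE_U.
by apply: (eqm_QU (act_spec v hg)); apply: (lsubM hU).
Qed.


Lemma ext_cons_split (n0 nt : A -> Prop) :
  simple_pq G Q U -> simple_pq G U P ->
  (forall x y, n0 x -> U y -> Q (x * y)) -> (forall x y, nt x -> P y -> U (x * y)) ->
  (forall x, n0 x -> G x) -> (forall x, nt x -> G x) ->
  Ext1_vanish G nt n0 ->
  exists W, [/\ lsub G W, (forall x, Q x -> W x), (forall x, W x -> P x),
     (forall x, W x -> U x -> Q x) &
     (forall y, P y -> exists w u, [/\ W w, U u & y = w + u])].
Proof.
move=> [_ [xU [hxU hxUQ]] simQU] [_ [xP [hxP hxPU]] simUP] hn0 hnt hn0G hntG hext.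
have hbot : simple_sq_ann G act n0 0%VS UE.
  split.
  - exact: sub0v.
  - apply/subvPn; have [v hv] := vec_onto (hUP hxU).
    exists v; first by apply/UE_U; apply: (eqm_QU (eqm_sym hQs hv)).
    rewrite memv0; apply/eqP => hv0; apply: hxUQ.
    by apply: (eqm_in hQs hv); rewrite hv0 vec0; apply: ss0.
  - move=> N hN _ hNU.
    case: (simQU (NA N) (NA_lsub hN) (fun x => NA_Q N (x:=x))).
    + move=> y [v [hv hy]]; apply: (eqm_QU hy); apply/UE_U.
      exact: (subvP hNU).
    + move=> h; left; apply/subvP => v hv; rewrite memv0; apply/eqP.
      by apply: vec_Q; apply: h; exists v; split=> //; apply: (eqm_refl hQs).
    + move=> h; right; apply/subvP => v /UE_U hv.
      by apply: NA_vec; apply: h.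
  - move=> x hx; apply/subvP => w /memv_imgP [v /UE_U hv ->]; rewrite memv0; apply/eqP.
    apply: vec_Q; apply: (eqm_in hQs (act_spec v (hn0G x hx))).
    exact: hn0.
have htop : simple_sq_ann G act nt UE fullv.
  split.
  - exact: subvf.
  - apply/subvPn; have [v hv] := vec_onto hxP.
    exists v; first exact: memvf.
    by apply/negP => /UE_U hvU; apply: hxPU; apply: (eqm_QU hv).
  - move=> N hN hUN _.
    have hUNA y : U y -> NA N y.
      move=> hy; have [v hv] := vec_onto (hUP hy).
      exists v; split=> //; apply: (subvP hUN); apply/UE_U.
      by apply: (eqm_QU (eqm_sym hQs hv)).
    case: (simUP (NA N) (NA_lsub hN) hUNA (fun x => NA_P (N:=N) (x:=x))).
    + move=> h; left; apply/subvP => v hv; apply/UE_U.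
      by apply: h; exists v; split=> //; apply: (eqm_refl hQs).
    + move=> h; right; apply/subvP => v _.
      by apply: NA_vec; apply: h; apply: vec_P.
  - move=> x hx; apply/subvP => w /memv_imgP [v _ ->]; apply/UE_U.
    apply: (eqm_QU (act_spec v (hntG x hx))).
    by apply: hnt => //; apply: vec_P.
have [W [hWs hcap hsum]] := hext _ act act_Gmod UE UE_stable hbot htop.
exists (NA W); split.
- exact: NA_lsub.
- by move=> x; apply: NA_Q.
- by move=> x; apply: NA_P.
- move=> y [v [hv hy]] hyU.
  have hvU : v \in UE by apply/UE_U; apply: (eqm_QU (eqm_sym hQs hy)).
  have : v \in (UE :&: W)%VS by rewrite memv_cap hvU hv.
  rewrite hcap memv0 => /eqP hv0.
  by apply: (eqm_in hQs hy); rewrite hv0 vec0; apply: ss0.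
move=> y hy; have [v hv] := vec_onto hy.
have : v \in (UE + W)%VS by rewrite hsum memvf.
case/memv_addP => u hu [w hw hvuw].
exists (y - vec u), (vec u); split; last by rewrite subrK.
- exists w; split=> //.
  by rewrite /eqm hvuw vecD opprD addrA in hv.
- by apply/UE_U.
Qed.

End ExtCons.

Lemma ext_split (K : fieldType) (A : algType K) (G Q U P n0 nt : A -> Prop) :
  is_subalg G -> lsub G Q -> lsub G U -> lsub G P ->
  simple_pq G Q U -> simple_pq G U P -> fd Q P ->
  (forall x y, n0 x -> U y -> Q (x * y)) -> (forall x y, nt x -> P y -> U (x * y)) ->
  cfs G n0 -> cfs G nt -> nt <> n0 -> quasicommutative G ->
  exists W, [/\ lsub G W, (forall x, Q x -> W x), (forall x, W x -> P x),
     (forall x, W x -> U x -> Q x) &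
     (forall y, P y -> exists w u, [/\ W w, U u & y = w + u])].
Proof.
move=> hG hQ hU hP hQU hUP hfd hn0 hnt hc0 hct hne hqc.
have hQUi : forall x, Q x -> U x by case: hQU.
have hUPi : forall x, U x -> P x by case: hUP.
have [s hs] := hfd.
have hfdQU : fd Q U by exists s => x hx; apply: hs; apply: hUPi.
have hfdUP : fd U P by exists s; apply: spans_trans (lsub_subsp hG hU) hQUi hs.
have [b [hbU hbsp hbmin]] := min_basis (lsub_subsp hG hQ) (lsub_subsp hG hU) hfdQU.
have [c [hcP hcsp hcmin]] := min_basis (lsub_subsp hG hU) (lsub_subsp hG hP) hfdUP.
apply: (ext_cons_split hG hQ hU hP hQUi hUPi hbU hbsp hbmin hcP hcsp hcmin hQU hUP hn0 hnt).
- by move=> x; apply: cfs_G.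
- by move=> x; apply: cfs_G.
- by apply: hqc.
Qed.

Lemma max_nat (P : nat -> Prop) (B : nat) : (exists n, P n) -> (forall n, P n -> (n <= B)%N) ->
  exists n, P n /\ forall m, P m -> (m <= n)%N.
Proof.
move=> hex hB.
have [u [hu humin]] : exists u, (forall k, P k -> (k <= u)%N) /\
    forall m, (forall k, P k -> (k <= m)%N) -> (u <= m)%N.
  by apply: min_nat; exists B.
exists u; split=> //.
apply: NNPP => hPu.
case: hex => n0 hn0.
case: u hu humin hPu => [|u] hu humin hPu.
  by move: (hu _ hn0); rewrite leqn0 => /eqP h; apply: hPu; rewrite -h.
have : (u.+1 <= u)%N; last by rewrite ltnn.
apply: humin => k hk; have := hu k hk; rewrite leq_eqVlt => /orP [/eqP hk'|//].
by exfalso; apply: hPu; rewrite -hk'.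
Qed.

Section Dec.
Variables (K : fieldType) (A : algType K) (G : A -> Prop).
Hypothesis hG : is_subalg G.
Implicit Types (s : seq A) (P Q N M R m n J : A -> Prop).

Lemma min_sub N R s : lsub G N -> lsub G R -> (forall x, N x -> R x) ->
  spans s N R -> (exists x, R x /\ ~ N x) ->
  exists N', [/\ lsub G N', simple_pq G N N', (forall x, N' x -> R x) &
     exists s', (size s' < size s)%N /\ spans s' N' R].
Proof.
move=> hN hR hNR hs hex.
have hNs := lsub_subsp hG hN; have hRs := lsub_subsp hG hR.
pose cand X := [/\ lsub G X, (forall x, N x -> X x), (forall x, X x -> R x) &
                   exists x, X x /\ ~ N x].
pose Pk k := exists X, cand X /\ forall t, spans t X R -> (k <= size t)%N.
have [k [[X [[hX hNX hXR hXN] hXk]] hkmax]] : exists k, Pk k /\ forall k0 : nat, Pk k0 -> (k0 <= k)%N.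
  apply: (max_nat (B := size s)).
    by exists 0%N, R; split=> //; split.
  move=> k [X [[hX hNX hXR hXN] hk]]; apply: hk.
  exact: spans_trans (lsub_subsp hG hX) hNX hs.
exists X; split=> //.
- split=> //; move=> Y hY hNY hYX.
  case: (classic (forall x, Y x -> N x)) => [h|h]; first by left.
  right; apply: NNPP => hno.
  have [w hw] := not_all_ex_not _ _ hno.
  have [hwX hwY] := imply_to_and _ _ hw.
  have [y hy] := not_all_ex_not _ _ h.
  have [hyY hyN] := imply_to_and _ _ hy.
  suff : (k.+1 <= k)%N by rewrite ltnn.
  apply: hkmax; exists Y; split; first by split=> //; [move=> x /hYX /hXR | exists y].
  move=> t ht.
  have [t' [ht' ht'sp]] := strict_sp (lsub_subsp hG hY) (lsub_subsp hG hX) hYX ht (hXR _ hwX) hwX hwY.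
  by apply: leq_ltn_trans ht'; apply: hXk.
- have [w [hwX hwN]] := hXN.
  exact: strict_sp hNs (lsub_subsp hG hX) hNX hs (hXR _ hwX) hwX hwN.
Qed.


Lemma pow_ann Q' P' n j : lsub G Q' -> lsub G P' -> simple_pq G Q' P' -> fd Q' P' -> cfs G n ->
  (forall p, prodset n j p -> forall y, P' y -> Q' (p * y)) ->
  forall x y, n x -> P' y -> Q' (x * y).
Proof.
move=> hQ hP hsim hfd hn hkill.
have hT := ann_cfs hG hQ hP hsim hfd.
suff hnT : forall x, n x -> ann G Q' P' x by move=> x y /hnT [_ h]; apply: h.
apply: NNPP => hno.
have hne : n <> ann G Q' P' by move=> he; apply: hno; rewrite he.
have [a [b [ha hb hab]]] := cfs_comax hG hn hT hne.
have [u [v [hu hv huv]]] := comax_pow hG (fun y => cfs_G hn) (fun x => cfs_G hT)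
   (fun x y => cfsD hT) (fun g x => cfsMl hT) (fun g x => cfsMr hT)
   (ex_intro _ a (ex_intro _ b (And3 ha hb hab))) j.
case: hsim => _ [y [hy hyQ]] _; apply: hyQ.
rewrite -(mul1r y) huv mulrDl; apply: (lsubD hQ).
  apply: (@PS_kill _ _ n j u Q' y (lsub0 hQ) (fun a b ha hb => lsubD hQ ha hb) _ hu) => p hp.
  exact: hkill.
by case: hv => _; apply.
Qed.

Lemma prodset0E n p : prodset n 0 p -> p = 1.
Proof. by case=> q [_ ->]; rewrite big_ord0. Qed.

Lemma prodset_split n a b p : (forall y, n y -> G y) -> prodset n (a + b) p ->
  exists q p', [/\ prodset n a q, prodset n b p' & p = q * p'].
Proof.
move=> hn; elim: a p => [|a IH] p /=.
  by move=> hp; exists 1, p; split=> //; [apply: prodset0 | rewrite mul1r].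
rewrite addSn => /prodset_invl [e [p1 [he hp1 ->]]].
have [q1 [p' [hq1 hp' ->]]] := IH _ hp1.
by exists (e * q1), p'; split=> //; [apply: prodset_cons | rewrite mulrA].
Qed.

Lemma in_Vn_mono n L y j j' : lsub G L -> cfs G n -> (j <= j')%N ->
  (forall p, prodset n j p -> L (p * y)) -> forall p, prodset n j' p -> L (p * y).
Proof.
move=> hL hn hjj' h p; rewrite -(subnK hjj').
case/(prodset_split (fun y => cfs_G hn)) => [q [p' [hq hp' ->]]].
rewrite -mulrA; apply: (lsubM hL); last exact: h.
exact: (prodset_G hG (fun y => cfs_G hn) hq).
Qed.

Lemma in_Vn0 n L : lsub G L -> in_Vn n L 0.
Proof. by move=> hL; exists 0%N => p _; rewrite mulr0; apply: lsub0 hL. Qed.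

Lemma in_VnD n L y y' : lsub G L -> cfs G n -> in_Vn n L y -> in_Vn n L y' -> in_Vn n L (y + y').
Proof.
move=> hL hn [j hj] [j' hj']; exists (maxn j j') => p hp; rewrite mulrDr.
apply: (lsubD hL).
  by apply: (in_Vn_mono hL hn (leq_maxl j j') hj).
by apply: (in_Vn_mono hL hn (leq_maxr j j') hj').
Qed.

Lemma in_VnM n L g y : lsub G L -> cfs G n -> G g -> in_Vn n L y -> in_Vn n L (g * y).
Proof.
move=> hL hn hg [[|j] hj].
  exists 0%N => p /prodset0E ->; rewrite mul1r; apply: (lsubM hL) => //.
  by rewrite -(mul1r y); apply: hj; apply: prodset0.
exists j.+1 => p hp; rewrite mulrA; apply: hj.
exact: (prodset_mulr hn hp hg).
Qed.


Definition compl Q N R W := [/\ lsub G W, (forall x, Q x -> W x), (forall x, W x -> R x),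
   (forall x, W x -> N x -> Q x) & (forall y, R y -> exists w u, [/\ W w, N u & y = w + u])].

Lemma complement (hqc : quasicommutative G) n0 n j : cfs G n0 -> cfs G n -> n <> n0 ->
  forall k Q N R, lsub G Q -> lsub G N -> lsub G R -> simple_pq G Q N ->
  (forall x y, n0 x -> N y -> Q (x * y)) -> (forall x, N x -> R x) -> fd Q R ->
  (forall p, prodset n j p -> forall y, R y -> N (p * y)) ->
  (exists s, (size s <= k)%N /\ spans s N R) ->
  exists W, compl Q N R W.
Proof.
move=> hn0 hn hne; elim=> [|k IH] Q N R hQ hN hR hsim hn0k hNR hfd hkill [s [hsz hs]].
  exists Q; have hQN : forall x, Q x -> N x by case: hsim.
  split=> //.
  - by move=> x /hQN /hNR.
  move=> y hy; exists 0, y; split; [exact: lsub0 hQ | | by rewrite add0r].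
  have [z [hz hyz]] := hs y hy.
  move: hsz; rewrite leqn0 => /nilP hs0; move: hz; rewrite hs0 => /spn_nil hz0.
  by move: hyz; rewrite hz0 subr0.
have hQN : forall x, Q x -> N x by case: hsim.
case: (classic (forall y, R y -> N y)) => hRN.
  exists Q; split=> //.
  - by move=> x /hQN /hNR.
  by move=> y hy; exists 0, y; split; [exact: lsub0 hQ | apply: hRN | rewrite add0r].
have hex : exists x, R x /\ ~ N x.
  apply: NNPP => hno; apply: hRN => y hy; apply: NNPP => hyN; apply: hno; by exists y.
have [N' [hN' hsimN hN'R [s' [hs'sz hs']]]] := min_sub hN hR hNR hs hex.
have hNN' : forall x, N x -> N' x by case: hsimN.
have hfdNN' : fd N N' by exists s => x /hN'R; apply: hs.
have hkillN' := pow_ann hN hN' hsimN hfdNN' hn (fun p hp y hy => hkill p hp y (hN'R y hy)).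
have hfdQN' : fd Q N' by case: hfd => t ht; exists t => x /hN'R; apply: ht.
have [W1 [hW1 hQW1 hW1N' hW1N hN'W1]] :=
  ext_split hG hQ hN hN' hsim hsimN hfdQN' hn0k hkillN' hn0 hn hne hqc.
have hsim1 : simple_pq G W1 N'.
  split=> //.
  - case: hsim => _ [x [hx hxQ]] _; exists x; split; first exact: hNN'.
    by move=> hxW; apply: hxQ; apply: hW1N.
  move=> X hX hW1X hXN'.
  pose XN x := X x /\ N x.
  have hXN : lsub G XN.
    split.
    - by split; [apply: lsub0 hX | apply: lsub0 hN].
    - by move=> x y [hx1 hx2] [hy1 hy2]; split; [apply: (lsubD hX) | apply: (lsubD hN)].
    - by move=> g x hg [hx1 hx2]; split; [apply: (lsubM hX) | apply: (lsubM hN)].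
  case: hsim => _ _ hs0.
  case: (hs0 XN hXN (fun x hx => conj (hW1X _ (hQW1 _ hx)) (hQN _ hx)) (fun x hx => hx.2)) => h.
    left => y hy; have [w [u [hw hu hyw]]] := hN'W1 y (hXN' y hy); rewrite hyw in hy *.
    apply: (lsubD hW1) => //; apply: hQW1; apply: h; split=> //.
    rewrite -(addKr w u); apply: (lsubD hX); last exact: hy.
    by apply: (lsubN hG hX); apply: hW1X.
  right => y hy; have [w [u [hw hu ->]]] := hN'W1 y hy.
  by apply: (lsubD hX); [apply: hW1X | apply: (h u hu).1].
have hn0k1 : forall x y, n0 x -> N' y -> W1 (x * y).
  move=> x y hx hy; have [w [u [hw hu ->]]] := hN'W1 y hy.
  rewrite mulrDr; apply: (lsubD hW1).
    by apply: (lsubM hW1) => //; apply: cfs_G hn0 hx.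
  by apply: hQW1; apply: hn0k.
have hfd1 : fd W1 R by case: hfd => t ht; exists t; apply: spans_trans (lsub_subsp hG hW1) hQW1 ht.
have [W [hW hW1W hWR hWN' hRW]] := IH W1 N' R hW1 hN' hR hsim1 hn0k1 hN'R hfd1
  (fun p hp y hy => hNN' _ (hkill p hp y hy)) (ex_intro _ s' (conj (leq_trans hs'sz hsz) hs')).
exists W; split=> //.
- by move=> x /hQW1 /hW1W.
- by move=> x hxW hxN; apply: hW1N => //; apply: hWN' => //; apply: hNN'.
move=> y hy; have [w [u' [hw hu' ->]]] := hRW y hy.
have [w1 [u [hw1 hu ->]]] := hN'W1 u' hu'.
exists (w + w1), u; split=> //; last by rewrite addrA.
by apply: (lsubD hW) => //; apply: hW1W.
Qed.


Lemma lift_comp (hqc : quasicommutative G) n0 n Q N P z : cfs G n0 -> cfs G n -> n <> n0 ->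
  lsub G Q -> lsub G N -> lsub G P -> simple_pq G Q N ->
  (forall x y, n0 x -> N y -> Q (x * y)) -> (forall x, N x -> P x) -> fd Q P ->
  P z -> in_Vn n N z -> exists z', [/\ P z', N (z' - z) & in_Vn n Q z'].
Proof.
move=> hn0 hn hne hQ hN hP hsim hn0k hNP hfd hz [j hj].
have hQN : forall x, Q x -> N x by case: hsim.
pose R y := exists g u, [/\ G g, N u & y = g * z + u].
have hR : lsub G R.
  split.
  - by exists 0, 0; split; [exact: G0 hG | exact: lsub0 hN | rewrite mul0r addr0].
  - move=> x y [g [u [hg hu ->]]] [g' [u' [hg' hu' ->]]].
    exists (g + g'), (u + u'); split; [exact: GD | exact: (lsubD hN) |].
    by rewrite mulrDl addrACA.
  - move=> g' x hg' [g [u [hg hu ->]]]; exists (g' * g), (g' * u); split.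
    + exact: GM.
    + exact: (lsubM hN).
    + by rewrite mulrDr mulrA.
have hNR : forall x, N x -> R x.
  by move=> x hx; exists 0, x; split=> //; [exact: G0 hG | rewrite mul0r add0r].
have hRP : forall x, R x -> P x.
  move=> x [g [u [hg hu ->]]]; apply: (lsubD hP); last exact: hNP.
  exact: (lsubM hP).
have hkill : forall p, prodset n j p -> forall y, R y -> N (p * y).
  move=> p hp y [g [u [hg hu ->]]]; rewrite mulrDr; apply: (lsubD hN); last first.
    by apply: (lsubM hN) => //; apply: (prodset_G hG (fun y => cfs_G hn) hp).
  case: j hj hp => [|j] hj hp.
    move: hp => /prodset0E ->; rewrite mul1r; apply: (lsubM hN) => //.
    by rewrite -(mul1r z); apply: hj; apply: prodset0.
  by rewrite mulrA; apply: hj; apply: (prodset_mulr hn hp hg).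
have [s hs] := hfd.
have hfdR : fd Q R by exists s => x /hRP; apply: hs.
have hsR : exists t, (size t <= size s)%N /\ spans t N R.
  by exists s; split=> //; apply: spans_trans (lsub_subsp hG hN) hQN _ => x /hRP; apply: hs.
have [W [hW hQW hWR hWN hRW]] :=
  complement hqc hn0 hn hne hQ hN hR hsim hn0k hNR hfdR hkill hsR.
have hzR : R z by exists 1, 0; split; [exact: G1 hG | exact: lsub0 hN | rewrite mul1r addr0].
have [w [u [hw hu hzw]]] := hRW z hzR.
exists w; split.
- exact: hRP (hWR _ hw).
- by rewrite hzw opprD addrA subrr sub0r; apply: (lsubN hG hN).
exists j => p hp; apply: hWN; first by apply: (lsubM hW) => //; apply: (prodset_G hG (fun y => cfs_G hn) hp).
have -> : w = z - u by rewrite hzw addrK.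
rewrite mulrBr; apply: (lsubB hG hN); first exact: hj.
by apply: (lsubM hN) => //; apply: (prodset_G hG (fun y => cfs_G hn) hp).
Qed.

Definition fam Q P r (ns : 'I_r -> A -> Prop) (xs : 'I_r -> A) :=
  [/\ forall i, cfs G (ns i), injective ns, (forall i, in_Vn (ns i) Q (xs i)) &
      forall i, P (xs i)].

Lemma fam_insert Q P r ns xs n x : lsub G Q -> lsub G P -> fam Q P ns xs ->
  cfs G n -> in_Vn n Q x -> P x ->
  exists r' (ns' : 'I_r' -> A -> Prop) xs', fam Q P ns' xs' /\
     \sum_(i < r') xs' i = \sum_(i < r) xs i + x.
Proof.
move=> hQ hP [hns hinj hV hPx] hn hx hPx0.
case: (classic (exists i0, ns i0 = n)) => [[i0 hi0]|hno].
  exists r, ns, (fun i => xs i + (if i == i0 then x else 0)); split.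
    split=> // i.
    - case: (eqVneq i i0) => [->|_]; last by rewrite addr0.
      by apply: in_VnD => //; rewrite hi0.
    - by apply: (lsubD hP) => //; case: (i == i0) => //; apply: lsub0 hP.
  rewrite big_split /=; congr (_ + _).
  by rewrite (bigD1 i0) //= eqxx big1 ?addr0 // => i /negbTE ->.
exists r.+1, (fun i => if unlift ord_max i is Some k then ns k else n),
  (fun i => if unlift ord_max i is Some k then xs k else x); split.
  split.
  - by move=> i; case: (unlift ord_max i).
  - move=> i1 i2; case: (unliftP ord_max i1) => [k1 ->|->]; case: (unliftP ord_max i2) => [k2 ->|->] //.
    + by move/hinj ->.
    + by move=> h; exfalso; apply: hno; exists k1.
    + by move=> h; exfalso; apply: hno; exists k2.
  - by move=> i; case: (unlift ord_max i).
  - by move=> i; case: (unlift ord_max i).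
rewrite big_ord_recr unlift_none /=; congr (_ + _); apply: eq_bigr => i _.
by rewrite widen_lift liftK.
Qed.


Definition decomp Q P y := exists r (ns : 'I_r -> A -> Prop) xs, fam Q P ns xs /\
   Q (y - \sum_(i < r) xs i).

Lemma decomp_in Q P y : lsub G Q -> Q y -> decomp Q P y.
Proof.
move=> hQ hy; exists 0%N, (fun _ => Q), (fun _ => 0); split.
  by split; case.
by rewrite big_ord0 subr0.
Qed.

Lemma decomposition (hqc : quasicommutative G) : forall k Q P, lsub G Q -> lsub G P ->
  (forall x, Q x -> P x) -> (exists s, (size s <= k)%N /\ spans s Q P) ->
  forall y, P y -> decomp Q P y.
Proof.
elim=> [|k IH] Q P hQ hP hQP [s [hsz hs]] y hy.
  apply: decomp_in => //; have [z [hz hyz]] := hs y hy.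
  move: hsz; rewrite leqn0 => /nilP hs0; move: hz; rewrite hs0 => /spn_nil hz0.
  by move: hyz; rewrite hz0 subr0.
case: (classic (forall y, P y -> Q y)) => hPQ; first by apply: decomp_in => //; apply: hPQ.
have hex : exists x, P x /\ ~ Q x.
  apply: NNPP => hno; apply: hPQ => x hx; apply: NNPP => hxQ; apply: hno; by exists x.
have [N [hN hsim hNP [s' [hs'sz hs']]]] := min_sub hQ hP hQP hs hex.
have hQN : forall x, Q x -> N x by case: hsim.
have hfdQN : fd Q N by exists s => x /hNP; apply: hs.
have hfdQP : fd Q P by exists s.
pose n0 := ann G Q N.
have hn0 : cfs G n0 := ann_cfs hG hQ hN hsim hfdQN.
have hn0k : forall x y1, n0 x -> N y1 -> Q (x * y1) by move=> x y1 [_ h]; apply: h.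
have [r [ns [z [[hns hinj hV hPz] hyz]]]] :=
  IH N P hN hP hNP (ex_intro _ s' (conj (leq_trans hs'sz hsz) hs')) y hy.
have hch : forall i, exists z', [/\ P z', N (z' - z i) & in_Vn (ns i) Q z'].
  move=> i; case: (classic (ns i = n0)) => hi.
    exists (z i); split=> //; first by rewrite subrr; apply: lsub0 hN.
    have [j hj] := hV i; exists j.+1 => p /prodset_invl [e [p' [he hp' ->]]].
    by rewrite -mulrA; apply: hn0k; [rewrite -hi | apply: hj].
  exact: (lift_comp hqc hn0 (hns i) hi hQ hN hP hsim hn0k hNP hfdQP (hPz i) (hV i)).
pose zf i := proj1_sig (constructive_indefinite_description _ (hch i)).
have hzf i : [/\ P (zf i), N (zf i - z i) & in_Vn (ns i) Q (zf i)].
  exact: (proj2_sig (constructive_indefinite_description _ (hch i))).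
pose rem := y - \sum_(i < r) zf i.
have hremN : N rem.
  have -> : rem = (y - \sum_(i < r) z i) - \sum_(i < r) (zf i - z i).
    by rewrite /rem sumrB opprB addrA subrK.
  apply: (lsubB hG hN) => //.
  by apply: (big_ind N (lsub0 hN) (fun a b ha hb => lsubD hN ha hb)) => i _; case: (hzf i).
have hremV : in_Vn n0 Q rem.
  exists 1%N => p /prodset_invl [e [p' [he /prodset0E -> ->]]].
  by rewrite mulr1; apply: hn0k.
have hremP : P rem.
  apply: (lsubB hG hP) => //.
  by apply: (big_ind P (lsub0 hP) (fun a b ha hb => lsubD hP ha hb)) => i _; case: (hzf i).
have hfam : fam Q P ns zf.
  by split=> // i; case: (hzf i).
have [r' [ns' [xs' [hfam' hsum]]]] := fam_insert hQ hP hfam hn0 hremV hremP.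
exists r', ns', xs'; split=> //.
rewrite hsum; have -> : \sum_(i < r) zf i + rem = y by rewrite /rem addrC subrK.
by rewrite subrr; apply: lsub0 hQ.
Qed.

End Dec.

Section Direct.
Variables (K : fieldType) (A : algType K) (G : A -> Prop).
Hypothesis hG : is_subalg G.
Variable Q : A -> Prop.
Hypothesis hQ : lsub G Q.

Definition Vj n j y := forall p, prodset n j p -> Q (p * y).

Lemma Vj_M n j g y : cfs G n -> G g -> Vj n j y -> Vj n j (g * y).
Proof.
move=> hn hg; case: j => [|j] hj p hp.
  move: hp => /prodset0E ->; rewrite mul1r; apply: (lsubM hQ) => //.
  by rewrite -(mul1r y); apply: hj; apply: prodset0.
by rewrite mulrA; apply: hj; apply: (prodset_mulr hn hp hg).
Qed.

Definition T n j g := G g /\ forall y, Vj n j y -> Q (g * y).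

Lemma T_G n j g : T n j g -> G g. Proof. by case. Qed.
Lemma T_D n j x y : T n j x -> T n j y -> T n j (x + y).
Proof.
move=> [hx hx'] [hy hy']; split; first exact: (GD hG).
by move=> z hz; rewrite mulrDl; apply: (lsubD hQ); [apply: hx' | apply: hy'].
Qed.
Lemma T_l n j g x : G g -> T n j x -> T n j (g * x).
Proof.
move=> hg [hx hx']; split; first exact: (GM hG).
by move=> z hz; rewrite -mulrA; apply: (lsubM hQ) => //; apply: hx'.
Qed.
Lemma T_r n j g x : cfs G n -> G g -> T n j x -> T n j (x * g).
Proof.
move=> hn hg [hx hx']; split; first exact: (GM hG).
by move=> z hz; rewrite -mulrA; apply: hx'; apply: Vj_M.
Qed.
Lemma T_PS n j u : cfs G n -> PS n j u -> T n j u.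
Proof.
move=> hn hu; split; first exact: (PS_G hG (fun y => cfs_G hn) hu).
move=> y hy; apply: (@PS_kill _ _ n j u Q y (lsub0 hQ) (fun a b ha hb => lsubD hQ ha hb) _ hu).
by move=> p hp; apply: hy.
Qed.

Lemma T_comax n n' j j' : cfs G n -> cfs G n' -> n <> n' ->
  exists e f, [/\ T n j e, T n' j' f & 1 = e + f].
Proof.
move=> hn hn' hne.
have [a [b [ha hb hab]]] := cfs_comax hG hn hn' hne.
have [u [v [hu hv huv]]] := comax_pow hG (fun y => cfs_G hn) (fun x => cfs_G hn')
   (fun x y => cfsD hn') (fun g x => cfsMl hn') (fun g x => cfsMr hn')
   (ex_intro _ a (ex_intro _ b (And3 ha hb hab))) j.
have [u' [v' [hu' hv' huv']]] := comax_pow hG (fun y => cfs_G hn') (@T_G n j)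
   (@T_D n j) (@T_l n j) (fun g x => @T_r n j g x hn)
   (ex_intro _ v (ex_intro _ u (And3 hv (T_PS hn hu) (etrans huv (addrC _ _))))) j'.
exists v', u'; split=> //; first exact: T_PS.
by rewrite addrC.
Qed.

Lemma direct r (ns : 'I_r -> A -> Prop) (xs : 'I_r -> A) :
  (forall i, cfs G (ns i)) -> injective ns -> (forall i, in_Vn (ns i) Q (xs i)) ->
  Q (\sum_(i < r) xs i) -> forall i, Q (xs i).
Proof.
move=> hns hinj hV hsum i.
pose jf k := proj1_sig (constructive_indefinite_description _ (hV k)).
have hjf k : Vj (ns k) (jf k) (xs k).
  exact: (proj2_sig (constructive_indefinite_description _ (hV k))).
have key : forall ks : seq 'I_r, exists e f, [/\ T (ns i) (jf i) e, G f,
    (forall k, k \in ks -> k != i -> T (ns k) (jf k) f) & 1 = e + f].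
  elim=> [|k ks [e [f [he hf hfk hef]]]].
    by exists 0, 1; split=> //; [split; [exact: G0 hG | move=> y _; rewrite mul0r; apply: lsub0 hQ] | exact: G1 hG | rewrite add0r].
  case: (eqVneq k i) => [->|hki].
    exists e, f; split=> // k'; rewrite inE => /orP [/eqP ->|hk']; first by rewrite eqxx.
    exact: hfk.
  have hne : ns i <> ns k by move=> /hinj h; move: hki; rewrite h eqxx.
  have [e' [f' [he' hf' hef']]] := T_comax (jf i) (jf k) (hns i) (hns k) hne.
  have he'G := T_G he'; have hf'G := T_G hf'; have heG := T_G he.
  exists (e * e' + e * f' + f * e'), (f * f'); split.
  - apply: T_D; first apply: T_D.
    + exact: (T_r (hns i) he'G he).
    + exact: (T_r (hns i) hf'G he).
    + exact: (T_l hf he').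
  - exact: (GM hG).
  - move=> k'; rewrite inE => /orP [/eqP -> _|hk' hk'i]; first exact: T_l.
    exact: (T_r (hns k') hf'G (hfk k' hk' hk'i)).
  have -> : (1 : A) = (e + f) * (e' + f') by rewrite -hef -hef' mulr1.
  by rewrite mulrDl !mulrDr !addrA.
have [e [f [[_ he] hf hfk hef]]] := key (enum 'I_r).
rewrite -(mul1r (xs i)) hef mulrDl; apply: (lsubD hQ); first exact: he.
have hsplit : f * xs i = f * \sum_(k < r) xs k - \sum_(k < r | k != i) f * xs k.
  by rewrite (bigD1 i) //= mulrDr mulr_sumr addrK.
rewrite hsplit; apply: (lsubB hG hQ); first exact: (lsubM hQ).
apply: (big_ind Q (lsub0 hQ) (fun a b ha hb => lsubD hQ ha hb)) => k hki.
by have [_ h] := hfk k (mem_enum _ k) hki; apply: h.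
Qed.

End Direct.

Section FD.
Variables (K : fieldType) (A : algType K) (G : A -> Prop).
Hypothesis hG : is_subalg G.
Implicit Types (s t : seq A) (P Q N M R m n J : A -> Prop).

Definition fcat (T : Type) r1 r2 (f1 : 'I_r1 -> T) (f2 : 'I_r2 -> T) (k : 'I_(r1 + r2)) : T :=
  match split k with inl i => f1 i | inr j => f2 j end.

Lemma fcat_sum (T : Type) (F : T -> A) r1 r2 (f1 : 'I_r1 -> T) (f2 : 'I_r2 -> T) :
  \sum_(i < r1) F (f1 i) + \sum_(j < r2) F (f2 j) = \sum_(k < r1 + r2) F (fcat f1 f2 k).
Proof.
rewrite big_split_ord /fcat; congr (_ + _); apply: eq_bigr => i _.
  by rewrite -[lshift r2 i]/(unsplit (inl i)) unsplitK.
by rewrite -[rshift r1 i]/(unsplit (inr i)) unsplitK.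
Qed.

Lemma fcat_P (T : Type) (Pf : T -> Prop) r1 r2 (f1 : 'I_r1 -> T) (f2 : 'I_r2 -> T) :
  (forall i, Pf (f1 i)) -> (forall j, Pf (f2 j)) -> forall k, Pf (fcat f1 f2 k).
Proof. by move=> h1 h2 k; rewrite /fcat; case: (split k). Qed.

Lemma AmPow_lsub m e : lsub G (AmPow m e).
Proof.
split.
- by exists 0%N, (fun _ => 0), (fun _ => 0); split; [case | rewrite big_ord0].
- move=> x y [r1 [c1 [p1 [hp1 ->]]]] [r2 [c2 [p2 [hp2 ->]]]].
  exists (r1 + r2)%N, (fun k => (fcat (fun i => (c1 i, p1 i)) (fun j => (c2 j, p2 j)) k).1),
    (fun k => (fcat (fun i => (c1 i, p1 i)) (fun j => (c2 j, p2 j)) k).2); split.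
    by move=> k; apply: (fcat_P (Pf := fun q => prodset m e q.2)).
  exact: (fcat_sum (fun q : A * A => q.1 * q.2) (fun i => (c1 i, p1 i)) (fun j => (c2 j, p2 j))).
- move=> g x _ [r [c [p [hp ->]]]]; exists r, (fun i => g * c i), p; split=> //.
  by rewrite mulr_sumr; apply: eq_bigr => i _; rewrite mulrA.
Qed.

Lemma AmPow_mul m k a x : AmPow m k x -> AmPow m k (a * x).
Proof.
case=> r [c [p [hp ->]]]; exists r, (fun i => a * c i), p; split=> //.
by rewrite mulr_sumr; apply: eq_bigr => i _; rewrite mulrA.
Qed.

Lemma AmPow_prod m k a p : prodset m k p -> AmPow m k (a * p).
Proof. by move=> hp; exists 1%N, (fun _ => a), (fun _ => p); split=> //; rewrite big_ord1. Qed.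


Definition gspn t x := exists c : 'I_(size t) -> A, (forall i, G (c i)) /\
   x = \sum_(i < size t) c i * t`_i.

Lemma gspn_cons a t x : gspn (a :: t) x <-> exists g z, [/\ G g, gspn t z & x = g * a + z].
Proof.
split.
  case=> c [hc ->]; rewrite /= big_ord_recl /=.
  exists (c ord0), (\sum_(i < size t) c (lift ord0 i) * t`_i); split=> //.
  by exists (fun i => c (lift ord0 i)).
case=> g [z [hg [c [hc ->]] ->]].
exists (fun i : 'I_(size t).+1 => if unlift ord0 i is Some j then c j else g); split.
  by move=> i; case: (unlift ord0 i).
rewrite /= big_ord_recl /= unlift_none; congr (_ + _).
by apply: eq_bigr => i _; rewrite liftK.
Qed.

Lemma gspn_lsub t : lsub G (gspn t).
Proof.
split.
- by exists (fun _ => 0); split=> [i|]; [exact: G0 hG | rewrite big1 // => i _; rewrite mul0r].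
- move=> x y [c [hc ->]] [c' [hc' ->]]; exists (fun i => c i + c' i); split.
    by move=> i; apply: (GD hG).
  by rewrite -big_split; apply: eq_bigr => i _; rewrite mulrDl.
- move=> g x hg [c [hc ->]]; exists (fun i => g * c i); split.
    by move=> i; apply: (GM hG).
  by rewrite mulr_sumr; apply: eq_bigr => i _; rewrite mulrA.
Qed.

Lemma gspn_G t x : allin G t -> gspn t x -> G x.
Proof.
move=> ht [c [hc ->]]; apply: (big_ind G (G0 hG) (GD hG)) => i _.
by apply: (GM hG) => //; apply: allin_nth.
Qed.

Lemma gspn_head a t : gspn (a :: t) a.
Proof.
apply/gspn_cons; exists 1, 0; split; [exact: G1 hG | | by rewrite mul1r addr0].
exact: (lsub0 (gspn_lsub t)).
Qed.

Lemma gspn_tail a t x : gspn t x -> gspn (a :: t) x.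
Proof.
by move=> h; apply/gspn_cons; exists 0, x; split=> //; [exact: G0 hG | rewrite mul0r add0r].
Qed.

Lemma fg_left m : noetherian G -> (forall x, m x -> G x) -> lsub G m ->
  exists t, allin m t /\ forall x, m x -> gspn t x.
Proof.
move=> [hnoeth _] hmG hm.
pose next t := match excluded_middle_informative (exists x, m x /\ ~ gspn t x) with
  | left h => proj1_sig (constructive_indefinite_description _ h) :: t
  | right _ => t end.
pose f i := iter i next [::].
have hf i : allin m (f i).
  elim: i => [|i IH] //=; rewrite /next; case: excluded_middle_informative => // h.
  by split=> //; case: (proj2_sig (constructive_indefinite_description _ h)).
have hnext t x : gspn t x -> gspn (next t) x.
  by rewrite /next; case: excluded_middle_informative => // h; apply: gspn_tail.
have [N0 hN0] := hnoeth (fun i => gspn (f i))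
  (fun i => conj (fun x => gspn_G (allin_impl hmG (hf i))) (gspn_lsub (f i)))
  (fun i x => hnext (f i) x).
exists (f N0); split=> //.
move=> x hx; apply: NNPP => hno.
have := hN0 N0.+1 (leqnSn N0); rewrite /= /next.
case: excluded_middle_informative => [h|h]; last by exfalso; apply: h; exists x.
have [hy1 hy2] := proj2_sig (constructive_indefinite_description _ h).
by move=> hsub; apply: hy2; apply: hsub; apply: gspn_head.
Qed.


Definition Ik m k y := exists r (c p : 'I_r -> A), (forall i, G (c i) /\ prodset m k (p i)) /\
   y = \sum_(i < r) c i * p i.

Lemma Ik_lsub m k : lsub G (Ik m k).
Proof.
split.
- by exists 0%N, (fun _ => 0), (fun _ => 0); split; [case | rewrite big_ord0].
- move=> x y [r1 [c1 [p1 [hp1 ->]]]] [r2 [c2 [p2 [hp2 ->]]]].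
  exists (r1 + r2)%N, (fun k => (fcat (fun i => (c1 i, p1 i)) (fun j => (c2 j, p2 j)) k).1),
    (fun k => (fcat (fun i => (c1 i, p1 i)) (fun j => (c2 j, p2 j)) k).2); split.
    by move=> i; apply: (fcat_P (Pf := fun q => G q.1 /\ prodset m k q.2)).
  exact: (fcat_sum (fun q : A * A => q.1 * q.2) (fun i => (c1 i, p1 i)) (fun j => (c2 j, p2 j))).
- move=> g x hg [r [c [p [hp ->]]]]; exists r, (fun i => g * c i), p; split.
    by move=> i; case: (hp i) => h1 h2; split=> //; apply: (GM hG).
  by rewrite mulr_sumr; apply: eq_bigr => i _; rewrite mulrA.
Qed.

Lemma Ik_one m k c p : G c -> prodset m k p -> Ik m k (c * p).
Proof. by move=> hc hp; exists 1%N, (fun _ => c), (fun _ => p); split=> //; rewrite big_ord1. Qed.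

Lemma Ik_cpg m k c p g : cfs G m -> G c -> prodset m k p -> G g -> Ik m k (c * p * g).
Proof.
move=> hm hc hp hg; case: k hp => [|k] hp.
  move: hp => /prodset0E ->; rewrite mulr1 -(mulr1 (c * g)).
  by apply: Ik_one; [apply: (GM hG) | apply: prodset0].
by rewrite -mulrA; apply: Ik_one => //; apply: (prodset_mulr hm hp hg).
Qed.

Lemma Ik0 m y : G y -> Ik m 0 y.
Proof. by move=> hy; rewrite -(mulr1 y); apply: Ik_one => //; apply: prodset0. Qed.

Lemma Ik_G m k y : cfs G m -> Ik m k y -> G y.
Proof.
move=> hm [r [c [p [hp ->]]]]; apply: (big_ind G (G0 hG) (GD hG)) => i _.
by case: (hp i) => h1 h2; apply: (GM hG) => //; apply: (prodset_G hG (fun y => cfs_G hm) h2).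
Qed.

Lemma Ik_rmul m k y a : Ik m k y -> m a -> Ik m k.+1 (y * a).
Proof.
move=> [r [c [p [hp ->]]]] ha; exists r, c, (fun i => p i * a); split.
  by move=> i; case: (hp i) => h1 h2; split=> //; apply: prodset_rcons.
by rewrite mulr_suml; apply: eq_bigr => i _; rewrite mulrA.
Qed.

Lemma Ik_sum m k r (F : 'I_r -> A) : (forall i, Ik m k (F i)) -> Ik m k (\sum_(i < r) F i).
Proof.
move=> h; have hI := Ik_lsub m k.
by apply: (big_ind (Ik m k) (lsub0 hI) (fun a b ha hb => lsubD hI ha hb)) => i _.
Qed.

Lemma Ik_decomp m t k y : cfs G m -> (forall x, m x -> gspn t x) ->
  Ik m k.+1 y -> exists ys : 'I_(size t) -> A, (forall l, Ik m k (ys l)) /\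
     y = \sum_(l < size t) ys l * t`_l.
Proof.
move=> hm ht [r [c [p [hp ->]]]].
have hdec : forall i, exists p' e, [/\ prodset m k p', m e & p i = p' * e].
  by move=> i; case: (hp i) => _ /prodset_invr [e [p' [he hp' ->]]]; exists p', e.
pose pp i := proj1_sig (constructive_indefinite_description _ (hdec i)).
have hpp i : exists e, [/\ prodset m k (pp i), m e & p i = pp i * e].
  exact: (proj2_sig (constructive_indefinite_description _ (hdec i))).
pose ee i := proj1_sig (constructive_indefinite_description _ (hpp i)).
have hee i : [/\ prodset m k (pp i), m (ee i) & p i = pp i * ee i].
  exact: (proj2_sig (constructive_indefinite_description _ (hpp i))).
have hme : forall i, m (ee i) by move=> i; case: (hee i).
pose gm i := proj1_sig (constructive_indefinite_description _ (ht _ (hme i))).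
have hgm i : (forall l, G (gm i l)) /\ ee i = \sum_(l < size t) gm i l * t`_l.
  exact: (proj2_sig (constructive_indefinite_description _ (ht _ (hme i)))).
exists (fun l => \sum_(i < r) c i * pp i * gm i l); split.
  move=> l; apply: Ik_sum => i; apply: Ik_cpg => //; first by case: (hp i).
    by case: (hee i).
  by case: (hgm i) => h _; apply: h.
rewrite (eq_bigr (fun i => \sum_(l < size t) c i * pp i * gm i l * t`_l)); last first.
  move=> i _; case: (hee i) => _ _ ->; case: (hgm i) => _ ->.
  by rewrite mulrA mulr_sumr; apply: eq_bigr => l _; rewrite !mulrA.
rewrite exchange_big; apply: eq_bigr => l _; by rewrite mulr_suml.
Qed.


Fixpoint prodsR (D t : seq A) : seq A :=
  if t is a :: t' then map (fun d => d * a) D ++ prodsR D t' else [::].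
Fixpoint prodsL (s B : seq A) : seq A :=
  if s is a :: s' then map (fun b => a * b) B ++ prodsL s' B else [::].

Lemma spn_mapr (D : seq A) (z a : A) : spn D z -> spn (map (fun d => d * a) D) (z * a).
Proof.
elim: D z => [|d D IH] z /=; first by move/spn_nil ->; rewrite mul0r; apply: spn0.
move/spn_cons=> [k [z' [hz' ->]]]; apply/spn_cons; exists k, (z' * a); split; first exact: IH.
by rewrite mulrDl -scalerAl.
Qed.

Lemma spn_mapl (B : seq A) (z a : A) : spn B z -> spn (map (fun b => a * b) B) (a * z).
Proof.
elim: B z => [|d D IH] z /=; first by move/spn_nil ->; rewrite mulr0; apply: spn0.
move/spn_cons=> [k [z' [hz' ->]]]; apply/spn_cons; exists k, (a * z'); split; first exact: IH.
by rewrite mulrDr -scalerAr.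
Qed.

Lemma allin_of_nth (P : A -> Prop) s : (forall i : 'I_(size s), P s`_i) -> allin P s.
Proof.
elim: s => [|a s IH] //= h; split; first exact: (h ord0).
by apply: IH => i; apply: (h (lift ord0 i)).
Qed.

Lemma allin_map (P P' : A -> Prop) (f : A -> A) s : (forall x, P x -> P' (f x)) ->
  allin P s -> allin P' (map f s).
Proof. by move=> h; elim: s => //= a s IH [ha hs]; split; [apply: h | apply: IH]. Qed.

Lemma step_sum m k (D : seq A) : cfs G m -> (forall y, Ik m k y -> exists z, spn D z /\ Ik m k.+1 (y - z)) ->
  forall t, allin m t -> forall ys : 'I_(size t) -> A, (forall l, Ik m k (ys l)) ->
  exists z, spn (prodsR D t) z /\ Ik m k.+2 (\sum_(l < size t) ys l * t`_l - z).
Proof.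
move=> hm hD; elim=> [|a t IH] /=.
  move=> _ ys _; exists 0; split; first exact: spn0.
  by rewrite big_ord0 subr0; apply: lsub0 (Ik_lsub m k.+2).
case=> ha ht ys hys; rewrite big_ord_recl /=.
have [z' [hz' hq']] := IH ht (fun l => ys (lift ord0 l)) (fun l => hys _).
have [z0 [hz0 hq0]] := hD _ (hys ord0).
exists (z0 * a + z'); split; first by apply: spn_cat => //; apply: spn_mapr.
rewrite opprD addrACA -mulrBl; apply: (lsubD (Ik_lsub m k.+2)) => //.
exact: Ik_rmul.
Qed.

Lemma S_k m t : cfs G m -> allin m t -> (forall x, m x -> gspn t x) ->
  forall k, exists D, allin G D /\ forall y, Ik m k y -> exists z, spn D z /\ Ik m k.+1 (y - z).
Proof.
move=> hm ht hgen; elim=> [|k [D [hDG hD]]].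
  have := hm; case=> _ _ _ [B [hBG hB]].
  exists B; split; first exact: allin_of_nth.
  move=> y /(Ik_G hm) hy; have [c hc] := hB y hy.
  exists (\sum_(i < size B) c i *: B`_i); split; first by exists c.
  move: hc; set w := y - _ => hw.
  rewrite -(mul1r w); apply: Ik_one; first exact: G1 hG.
  by rewrite -(mulr1 w); apply: prodset_cons hw (prodset0 m).
exists (prodsR D t); split.
  elim: (t) (allin_impl (fun x => cfs_G hm) ht) => [|a t' IH] //= [haG ht'G].
  apply: allin_cat; last exact: IH.
  by apply: allin_map hDG => x hx; apply: (GM hG).
move=> y hy; have [ys [hys ->]] := Ik_decomp hm hgen hy.
exact: (step_sum hm hD ht hys).
Qed.

Lemma C_k m t : cfs G m -> allin m t -> (forall x, m x -> gspn t x) ->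
  forall k, exists C, allin G C /\ forall g, G g -> exists z, spn C z /\ Ik m k (g - z).
Proof.
move=> hm ht hgen; elim=> [|k [C [hCG hC]]].
  exists [::]; split=> // g hg; exists 0; split; first exact: spn0.
  by rewrite subr0; apply: Ik0.
have [D [hDG hD]] := S_k hm ht hgen k.
exists (C ++ D); split; first exact: allin_cat.
move=> g hg; have [z [hz hq]] := hC g hg; have [z' [hz' hq']] := hD _ hq.
exists (z + z'); split; first exact: spn_cat.
by rewrite opprD addrA.
Qed.


Definition rspanG (s : seq A) y := exists c : 'I_(size s) -> A, (forall i, G (c i)) /\
   y = \sum_(i < size s) s`_i * c i.

Lemma rspan_fd (s B : seq A) (I Lt : A -> Prop) : subsp Lt ->
  allin (fun a => forall i, I i -> Lt (a * i)) s ->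
  (forall g, G g -> exists z, spn B z /\ I (g - z)) ->
  forall c : 'I_(size s) -> A, (forall i, G (c i)) ->
  exists z, spn (prodsL s B) z /\ Lt (\sum_(i < size s) s`_i * c i - z).
Proof.
move=> hLt; elim: s => [|a s IH] /=.
  move=> _ _ c _; exists 0; split; first exact: spn0.
  by rewrite big_ord0 subr0; apply: ss0.
case=> ha hs hB c hc; rewrite big_ord_recl /=.
have [z' [hz' hq']] := IH hs hB (fun i => c (lift ord0 i)) (fun i => hc _).
have [z0 [hz0 hq0]] := hB _ (hc ord0).
exists (a * z0 + z'); split; first by apply: spn_cat => //; apply: spn_mapl.
rewrite opprD addrACA -mulrBr; apply: (ssD hLt) => //.
exact: ha.
Qed.

Lemma Ik_AmPow m k a i : Ik m k i -> AmPow m k (a * i).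
Proof.
case=> r [c [p [hp ->]]]; exists r, (fun j => a * c j), p; split; first by move=> j; case: (hp j).
by rewrite mulr_sumr; apply: eq_bigr => j _; rewrite mulrA.
Qed.

Lemma rspan_nth (s : seq A) (i : 'I_(size s)) : rspanG s s`_i.
Proof.
exists (fun j => ((j == i)%:R : A)); split.
  by move=> j; case: (j == i); [exact: G1 hG | exact: G0 hG].
rewrite (bigD1 i) //= eqxx mulr1 big1 ?addr0 // => j /negbTE ->.
by rewrite mulr0.
Qed.

Lemma fd_L m k x : noetherian G -> quasicentral G -> cfs G m ->
  fd (AmPow m k) (fun y => exists g l, [/\ GaG G x g, AmPow m k l & y = g + l]).
Proof.
move=> hnoeth hqc hm.
have [t [ht hgen]] := fg_left hnoeth (fun x => cfs_G hm) (cfs_l hm).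
have [C [hCG hC]] := C_k hm ht hgen k.
have [_ [s hs]] := hqc x.
have hLs := lsub_subsp hG (AmPow_lsub m k).
exists (prodsL s C) => y [g [l [hg hl ->]]].
have [c [hc hgc]] := (hs g).1 hg.
have [z [hz hq]] := rspan_fd hLs (allin_all _ (fun a i hi => Ik_AmPow a hi)) hC hc.
exists z; split=> //.
rewrite addrAC; apply: (ssD hLs) => //.
by rewrite hgc.
Qed.

Lemma GaG_lsub a : lsub G (GaG G a).
Proof.
split.
- by exists 0%N, (fun _ => 0), (fun _ => 0); split; [case | rewrite big_ord0].
- move=> x y [r1 [c1 [p1 [hp1 ->]]]] [r2 [c2 [p2 [hp2 ->]]]].
  exists (r1 + r2)%N, (fun k => (fcat (fun i => (c1 i, p1 i)) (fun j => (c2 j, p2 j)) k).1),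
    (fun k => (fcat (fun i => (c1 i, p1 i)) (fun j => (c2 j, p2 j)) k).2); split.
    by move=> i; apply: (fcat_P (Pf := fun q => G q.1 /\ G q.2)).
  exact: (fcat_sum (fun q : A * A => q.1 * a * q.2) (fun i => (c1 i, p1 i)) (fun j => (c2 j, p2 j))).
- move=> g x hg [r [c [p [hp ->]]]]; exists r, (fun i => g * c i), p; split.
    by move=> i; case: (hp i) => h1 h2; split=> //; apply: (GM hG).
  by rewrite mulr_sumr; apply: eq_bigr => i _; rewrite !mulrA.
Qed.

Lemma Gam_lsub a m : lsub G (Gam G a m).
Proof.
split.
- by exists 0%N, (fun _ => 0), (fun _ => 0); split; [case | rewrite big_ord0].
- move=> x y [r1 [c1 [p1 [hp1 ->]]]] [r2 [c2 [p2 [hp2 ->]]]].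
  exists (r1 + r2)%N, (fun k => (fcat (fun i => (c1 i, p1 i)) (fun j => (c2 j, p2 j)) k).1),
    (fun k => (fcat (fun i => (c1 i, p1 i)) (fun j => (c2 j, p2 j)) k).2); split.
    by move=> i; apply: (fcat_P (Pf := fun q => G q.1 /\ m q.2)).
  exact: (fcat_sum (fun q : A * A => q.1 * a * q.2) (fun i => (c1 i, p1 i)) (fun j => (c2 j, p2 j))).
- move=> g x hg [r [c [p [hp ->]]]]; exists r, (fun i => g * c i), p; split.
    by move=> i; case: (hp i) => h1 h2; split=> //; apply: (GM hG).
  by rewrite mulr_sumr; apply: eq_bigr => i _; rewrite !mulrA.
Qed.

Lemma GaG_self a : GaG G a a.
Proof.
exists 1%N, (fun _ => 1), (fun _ => 1); split; first by move=> i; split; apply: (G1 hG).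
by rewrite big_ord1 mul1r mulr1.
Qed.

Lemma Gam_GaG a m x : cfs G m -> Gam G a m x -> GaG G a x.
Proof. by move=> hm [r [c [p [hp ->]]]]; exists r, c, p; split=> // i; case: (hp i) => h1 h2; split=> //; apply: (cfs_G hm). Qed.

Lemma fd_Gam a m : quasicentral G -> cfs G m -> fd (Gam G a m) (GaG G a).
Proof.
move=> hqc hm.
have [_ [s hs]] := hqc a.
have := hm; case=> _ _ _ [B [hBG hB]].
have hLs := lsub_subsp hG (Gam_lsub a m).
exists (prodsL s B) => y hy.
have [c [hc hyc]] := (hs y).1 hy.
have hI : allin (fun b => forall i, m i -> Gam G a m (b * i)) s.
  apply: allin_of_nth => i.
  have [r [g [h [hgh ->]]]] := (hs _).2 (rspan_nth i).
  move=> j hj; exists r, g, (fun l => h l * j); split.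
    by move=> l; case: (hgh l) => h1 h2; split=> //; apply: (cfsMl hm).
  by rewrite mulr_suml; apply: eq_bigr => l _; rewrite !mulrA.
have hB' : forall g, G g -> exists z, spn B z /\ m (g - z).
  by move=> g hg; have [cc hcc] := hB g hg; exists (\sum_(i < size B) cc i *: B`_i); split=> //; exists cc.
have [z [hz hq]] := rspan_fd hLs hI hB' hc.
by exists z; split=> //; rewrite hyc.
Qed.

End FD.

Lemma lsub_sum (K : fieldType) (A : algType K) (G P1 P2 : A -> Prop) :
  lsub G P1 -> lsub G P2 -> lsub G (fun y => exists g l, [/\ P1 g, P2 l & y = g + l]).
Proof.
move=> h1 h2; split.
- by exists 0, 0; split; [apply: lsub0 h1 | apply: lsub0 h2 | rewrite addr0].
- move=> x y [g [l [hg hl ->]]] [g' [l' [hg' hl' ->]]]; exists (g + g'), (l + l').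
  by split; [exact: (lsubD h1 hg hg') | exact: (lsubD h2 hl hl') | rewrite addrACA].
- move=> a x ha [g [l [hg hl ->]]]; exists (a * g), (a * l).
  by split; [exact: (lsubM h1 ha hg) | exact: (lsubM h2 ha hl) | rewrite mulrDr].
Qed.

Lemma HC_part (K : fieldType) (A : algType K) (G : A -> Prop) :
  is_subalg G -> noetherian G -> quasicommutative G -> quasicentral G -> HC_block_subalg G.
Proof.
move=> hG hnoeth hqcomm hqc m hm k.
have hL := AmPow_lsub G m k.
split.
  move=> x.
  pose P := fun y => exists g l, [/\ GaG G x g, AmPow m k l & y = g + l].
  have hP : lsub G P := lsub_sum (GaG_lsub hG x) hL.
  have hLP : forall y, AmPow m k y -> P y.
    by move=> y hy; exists 0, y; split=> //; [exact: (lsub0 (GaG_lsub hG x)) | rewrite add0r].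
  have hxP : P x by exists x, 0; split; [exact: (GaG_self hG x) | exact: (lsub0 hL) | rewrite addr0].
  have [s hs] := fd_L hG k x hnoeth hqc hm.
  have [r [ns [xs [[hns hinj hV _] hq]]]] :=
    decomposition hG hqcomm (k := size s) hL hP hLP (ex_intro _ s (conj (leqnn _) hs)) hxP.
  by exists r, ns, xs; split.
move=> r ns xs hns hinj hV hsum i.
exact: (direct hG hL hns hinj hV hsum).
Qed.

From mathcomp Require Import zify.

Section CS.
Variables (K : fieldType) (A : algType K) (G : A -> Prop).
Hypothesis hG : is_subalg G.
Implicit Types (s : seq A) (P Q N M R : A -> Prop).

Definition cser Q P r (Ls : nat -> A -> Prop) :=
  [/\ forall i, (i <= r)%N -> lsub G (Ls i), Ls 0%N = Q, Ls r = P,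
      forall i, (i < r)%N -> simple_pq G (Ls i) (Ls i.+1) &
      forall i x, (i <= r)%N -> Ls i x -> P x].

Lemma cs_exists : forall k Q P, lsub G Q -> lsub G P -> (forall x, Q x -> P x) ->
  (exists s, (size s <= k)%N /\ spans s Q P) -> exists r Ls, cser Q P r Ls.
Proof.
have triv : forall Q P, lsub G Q -> (forall x, Q x -> P x) -> (forall y, P y -> Q y) ->
    exists r Ls, cser Q P r Ls.
  move=> Q P hQ hQP hPQ; exists 0%N, (fun _ => Q); split=> //.
  - by apply: pred_ext => x; split; [apply: hQP | apply: hPQ].
  - by move=> i x _; apply: hQP.
move=> k; elim: k => [|k IH] Q P hQ hP hQP [s [hsz hs]].
  apply: triv => // y hy; have [z [hz hyz]] := hs y hy.
  move: hsz; rewrite leqn0 => /nilP hs0; move: hz; rewrite hs0 => /spn_nil hz0.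
  by move: hyz; rewrite hz0 subr0.
case: (classic (forall y, P y -> Q y)) => hPQ; first exact: triv.
have hex : exists x, P x /\ ~ Q x.
  apply: NNPP => hno; apply: hPQ => x hx; apply: NNPP => hxQ; apply: hno; by exists x.
have [N [hN hsim hNP [s' [hs'sz hs']]]] := min_sub hG hQ hP hQP hs hex.
have [r [Ls [hl h0 hr hs1 hc]]] :=
  IH N P hN hP hNP (ex_intro _ s' (conj (leq_trans hs'sz hsz) hs')).
exists r.+1, (fun i => if i is i'.+1 then Ls i' else Q); split=> //.
- by case=> [|i] hi //; apply: hl.
- case=> [|i] hi /=; first by rewrite h0.
  by apply: hs1.
- by case=> [|i] x hi //=; [apply: hQP | apply: hc].
Qed.

Lemma cs_cat Q1 P1 P2 r1 r2 L1 L2 : cser Q1 P1 r1 L1 -> cser P1 P2 r2 L2 ->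
  cser Q1 P2 (r1 + r2) (fun i => if (i <= r1)%N then L1 i else L2 (i - r1)%N).
Proof.
move=> [hl1 h01 hr1 hs1 hc1] [hl2 h02 hr2 hs2 hc2].
have hP12 x : P1 x -> P2 x by move=> hx; apply: (hc2 0%N) => //; rewrite h02.
split.
- move=> i hi; case: ifP => hir; first exact: hl1.
  by apply: hl2; lia.
- by rewrite leq0n.
- case: ifP => h.
    have e2 : r2 = 0%N by lia.
    by rewrite e2 addn0 hr1 -h02 -e2 hr2.
  by rewrite addKn.
- move=> i hi; case: (ltnP i r1) => hir.
    by rewrite (ltnW hir); apply: hs1.
  case: (eqVneq i r1) => [->|hne].
    rewrite leqnn subSn // subnn hr1 -h02; apply: hs2; lia.
  have h1 : (i <= r1)%N = false by apply/negbTE; rewrite -ltnNge; lia.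
  rewrite h1 subSn; last lia.
  by apply: hs2; lia.
- move=> i x hi; case: ifP => h hx; first by apply: hP12; apply: (hc1 i).
  by apply: (hc2 (i - r1)%N) => //; lia.
Qed.

End CS.

Section Supp.
Variables (K : fieldType) (A : algType K) (G : A -> Prop).
Hypothesis hG : is_subalg G.
Implicit Types (s : seq A) (P Q N M R : A -> Prop).

Lemma supp_x (L n : A -> Prop) x0 : lsub G L -> cfs G n -> in_Vn n L x0 -> ~ L x0 ->
  exists x, (forall e, n e -> L (e * x)) /\ ~ L x.
Proof.
move=> hL hn hV hx0.
have [j0 [hj0 hmin]] := min_nat hV.
case: j0 hj0 hmin => [|j] hj hmin.
  by exfalso; apply: hx0; rewrite -(mul1r x0); apply: hj; apply: prodset0.
have hnj : ~ (forall p, prodset n j p -> L (p * x0)).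
  by move=> h; have := hmin j h; rewrite ltnn.
have [p hp] := not_all_ex_not _ _ hnj.
have [hpj hpL] := imply_to_and _ _ hp.
exists (p * x0); split=> // e he; rewrite mulrA; apply: hj.
exact: prodset_cons.
Qed.

Lemma AmPow_S m k y : cfs G m -> AmPow m k.+1 y -> AmPow m k y.
Proof.
move=> hm [r [c [p [hp ->]]]].
have hdec : forall i, exists e q, [/\ m e, prodset m k q & p i = e * q].
  by move=> i; case/prodset_invl: (hp i) => e [q [he hq ->]]; exists e, q.
pose ee i := proj1_sig (constructive_indefinite_description _ (hdec i)).
have hee i : exists q, [/\ m (ee i), prodset m k q & p i = ee i * q].
  exact: (proj2_sig (constructive_indefinite_description _ (hdec i))).
pose qq i := proj1_sig (constructive_indefinite_description _ (hee i)).
have hqq i : [/\ m (ee i), prodset m k (qq i) & p i = ee i * qq i].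
  exact: (proj2_sig (constructive_indefinite_description _ (hee i))).
exists r, (fun i => c i * ee i), qq; split; first by move=> i; case: (hqq i).
by apply: eq_bigr => i _; case: (hqq i) => _ _ ->; rewrite mulrA.
Qed.

Lemma AmPow_mono m k k' y : cfs G m -> (k <= k')%N -> AmPow m k' y -> AmPow m k y.
Proof.
move=> hm hkk'; rewrite -(subnK hkk'); elim: (k' - k)%N y => [|d IH] y //=.
by rewrite addSn => /(AmPow_S hm) /IH.
Qed.

Lemma find_level (Pn : nat -> Prop) e : Pn 0%N -> ~ Pn e ->
  exists i, [/\ (i < e)%N, Pn i & ~ Pn i.+1].
Proof.
elim: e => [|e IH] h0 he; first by [].
case: (classic (Pn e)) => hPe; first by exists e; split.
by have [i [hi h1 h2]] := IH h0 hPe; exists i; split=> //; apply: ltnW.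
Qed.

End Supp.

Section Level.
Variables (K : fieldType) (A : algType K) (G : A -> Prop).
Hypothesis hG : is_subalg G.

Lemma level_fact (m n : A -> Prop) e i x : cfs G m -> cfs G n -> quasicentral G ->
  (forall h, n h -> AmPow m e (h * x)) -> (i < e)%N -> AmPow m i x -> ~ AmPow m i.+1 x ->
  exists a, in_Fact G n (Gam G a m) (GaG G a).
Proof.
move=> hm hn hqc hnx hie [r [c [p [hp hx]]]] hxn.
have hLi := AmPow_lsub G m i.+1.
pose N T y := exists w (ys : 'I_r -> A), [/\ AmPow m i.+1 w, forall t, GaG G (c t) (ys t),
   forall t : 'I_r, (T <= t)%N -> ys t = 0 & y = w + \sum_(t < r) ys t * p t].
have hN T : lsub G (N T).
  split.
  - exists 0, (fun _ => 0); split.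
    + exact: lsub0 hLi.
    + by move=> t; apply: lsub0 (GaG_lsub hG _).
    + by [].
    + by rewrite add0r big1 // => t _; rewrite mul0r.
  - move=> y1 y2 [w1 [ys1 [hw1 hys1 hz1 ->]]] [w2 [ys2 [hw2 hys2 hz2 ->]]].
    exists (w1 + w2), (fun t => ys1 t + ys2 t); split.
    + exact: lsubD hLi hw1 hw2.
    + by move=> t; apply: (lsubD (GaG_lsub hG _)).
    + by move=> t ht; rewrite hz1 // hz2 // addr0.
    + by rewrite addrACA -big_split; congr (_ + _); apply: eq_bigr => t _; rewrite mulrDl.
  - move=> g y hg [w [ys [hw hys hz ->]]]; exists (g * w), (fun t => g * ys t); split.
    + exact: lsubM hLi hg hw.
    + by move=> t; apply: (lsubM (GaG_lsub hG _)).
    + by move=> t ht; rewrite hz // mulr0.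
    + by rewrite mulrDr mulr_sumr; congr (_ + _); apply: eq_bigr => t _; rewrite mulrA.
have hNw T w : AmPow m i.+1 w -> N T w.
  move=> hw; exists w, (fun _ => 0); split=> //.
  + by move=> t; apply: lsub0 (GaG_lsub hG _).
  + by rewrite big1 ?addr0 // => t _; rewrite mul0r.
have hxr : N r x.
  exists 0, c; split.
  + exact: lsub0 hLi.
  + by move=> t; apply: GaG_self.
  + by move=> t; rewrite leqNgt ltn_ord.
  + by rewrite add0r.
have [T0 [hT0 hmin]] := min_nat (ex_intro (fun T => N T x) r hxr).
case: T0 hT0 hmin => [|T'] hT0 hmin.
  exfalso; apply: hxn; case: hT0 => w [ys [hw _ hz ->]].
  by rewrite big1 ?addr0 // => t _; rewrite hz // mul0r.
have hT'r : (T' < r)%N by apply: hmin.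
have hnT' : ~ N T' x by move=> h; have := hmin T' h; rewrite ltnn.
pose t0 : 'I_r := Ordinal hT'r.
have [w [ys [hw hys hz hxeq]]] := hT0.
pose u := w + \sum_(t < r) (if t == t0 then 0 else ys t) * p t.
have hu : N T' u.
  exists w, (fun t => if t == t0 then 0 else ys t); split=> //.
  + by move=> t; case: (t == t0); [apply: lsub0 (GaG_lsub hG _) | apply: hys].
  + move=> t ht; case: eqVneq => // hne; apply: hz.
    have : val t != T' by apply: contraNneq hne => h; apply/eqP; apply: val_inj.
    by rewrite ltn_neqAle eq_sym ht andbT.
set a := c t0; set pp := p t0; set y0 := ys t0.
have hxu : x = u + y0 * pp.
  rewrite hxeq /u -addrA; congr (_ + _).
  rewrite (bigD1 t0) //= [in RHS](bigD1 t0) //= eqxx mul0r add0r addrC.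
  by congr (_ + _); apply: eq_bigr => t /negbTE ->.
pose Q0 z := GaG G a z /\ N T' (z * pp).
pose P0 z := GaG G a z /\ exists g, G g /\ N T' (z * pp - g * x).
have hGaG := GaG_lsub hG a.
have hQ0 : lsub G Q0.
  split.
  - by split; [apply: lsub0 hGaG | rewrite mul0r; apply: lsub0 (hN T')].
  - move=> z1 z2 [h1 h1'] [h2 h2']; split; first exact: lsubD hGaG h1 h2.
    by rewrite mulrDl; apply: lsubD (hN T') h1' h2'.
  - move=> g z hg [h1 h1']; split; first exact: lsubM hGaG hg h1.
    by rewrite -mulrA; apply: lsubM (hN T') hg h1'.
have hP0 : lsub G P0.
  split.
  - split; first exact: lsub0 hGaG.
    by exists 0; split; [exact: G0 hG | rewrite !mul0r subr0; apply: lsub0 (hN T')].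
  - move=> z1 z2 [h1 [g1 [hg1 h1']]] [h2 [g2 [hg2 h2']]]; split; first exact: lsubD hGaG h1 h2.
    exists (g1 + g2); split; first exact: GD.
    by rewrite mulrDl mulrDl opprD addrACA; apply: lsubD (hN T') h1' h2'.
  - move=> g z hg [h1 [g1 [hg1 h1']]]; split; first exact: lsubM hGaG hg h1.
    exists (g * g1); split; first exact: GM.
    by rewrite -!mulrA -mulrBr; apply: lsubM (hN T') hg h1'.
have hGamQ0 z : Gam G a m z -> Q0 z.
  move=> hz'; split; first exact: Gam_GaG hz'.
  apply: hNw; case: hz' => r' [g [h [hgh ->]]].
  exists r', (fun l => g l * a), (fun l => h l * pp); split.
    by move=> l; case: (hgh l) => _ hl; apply: prodset_cons => //; apply: hp.
  by rewrite mulr_suml; apply: eq_bigr => l _; rewrite !mulrA.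
have hQ0P0 z : Q0 z -> P0 z.
  by case=> h1 h2; split=> //; exists 0; split; [exact: G0 hG | rewrite mul0r subr0].
have hy0 : P0 y0.
  split; first exact: hys.
  exists 1; split; first exact: G1 hG.
  by rewrite mul1r hxu opprD addrCA subrr addr0; exact: (lsubN hG (hN T') hu).
have hy0Q : ~ Q0 y0.
  by case=> _ h; apply: hnT'; rewrite hxu; apply: lsubD (hN T') hu h.
have hann h z : n h -> P0 z -> Q0 (h * z).
  move=> hh [h1 [g [hg h1']]]; have hhG := cfs_G hn hh.
  split; first exact: lsubM hGaG hhG h1.
  have -> : h * z * pp = h * (z * pp - g * x) + (h * g) * x.
    by rewrite mulrBr !mulrA subrK.
  apply: lsubD (hN T') _ _; first exact: lsubM (hN T') hhG h1'.
  apply: hNw; apply: AmPow_mono hm _ (hnx _ (cfsMr hn hg hh)) => //.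
have [s hs] := fd_Gam hG a hqc hm.
have hGamGaG z : Gam G a m z -> GaG G a z by apply: Gam_GaG.
have [r1 [L1 c1]] := cs_exists hG (k := size s) (Gam_lsub hG a m) hQ0 hGamQ0
  (ex_intro _ s (conj (leqnn _) (fun z hz => hs z (proj1 hz)))).
have [r2 [L2 c2]] := cs_exists hG (k := size s) hQ0 hP0 hQ0P0
  (ex_intro _ s (conj (leqnn _) (fun z hz => (spans_trans (lsub_subsp hG hQ0) hGamQ0 hs) z (proj1 hz)))).
have [r3 [L3 c3]] := cs_exists hG (k := size s) hP0 hGaG (fun z hz => (proj1 hz))
  (ex_intro _ s (conj (leqnn _) (spans_trans (lsub_subsp hG hP0) (fun z hz => hQ0P0 z (hGamQ0 z hz)) hs))).
have c12 := cs_cat c1 c2.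
have c123 := cs_cat c12 c3.
exists a.
case: (c123) => hl h0 hr hsim hcont.
have hr2 : (0 < r2)%N.
  case: c2 => _ h20 h2r _ _; rewrite lt0n; apply/eqP => e2; apply: hy0Q.
  by rewrite -h20 -e2 h2r.
exists (r1 + r2 + r3)%N, (fun i => if (i <= r1 + r2)%N then
   (if (i <= r1)%N then L1 i else L2 (i - r1)%N) else L3 (i - (r1 + r2))%N); split=> //.
- by move=> z; rewrite h0.
- by move=> z; rewrite hr.
exists r1; split; first by lia.
have -> : (r1 <= r1 + r2)%N = true by lia.
have -> : (r1.+1 <= r1 + r2)%N = true by lia.
rewrite leqnn ltnn subSn // subnn.
case: c1 => _ _ -> _ _.
case: c2 => _ _ _ _ hc2.
by move=> h z hh hz1; apply: hann => //; apply: (hc2 1%N).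
Qed.

End Level.


Unset Implicit Arguments. Set Strict Implicit.

Theorem mainTheorem11 (K : fieldType) (A : algType K) (G : A -> Prop) :
  is_subalg G -> noetherian G -> quasicommutative G -> quasicentral G ->
  HC_block_subalg G /\
  (forall m, cfs G m -> forall e : nat, (1 <= e)%N ->
     forall n, Supp G (AmPow m e) n -> Xset G m n).
Proof.
move=> hG hnoeth hqcomm hqc; split; first exact: HC_part.
move=> m hm e he n [hn [x0 [hV hx0]]].
have [x [hnx hxL]] := supp_x (AmPow_lsub G m e) hn hV hx0.
have h0 : AmPow m 0 x.
  by rewrite -(mulr1 x); apply: AmPow_prod; apply: prodset0.
have [i [hie hi hi1]] := find_level (Pn := fun i => AmPow m i x) h0 hxL.
split=> //.
exact: (level_fact hG hm hn hqc hnx hie hi hi1).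
Qed.
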